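(* Let $H(z)$ be a function analytic at $0$ and let $A(z)=\sum_{n>0}a_nz^n$ be a formal power series whose coefficients satisfy \[ a_n \approx n^{\alpha n}\beta^n n^\gamma\,\tilde A(n^{-1}) \] for some $\alpha\in\mathbb{Z}_{>0}$, $\beta\in\mathbb{R}_{>0}$, $\gamma\in\mathbb{R}$ and nonzero formal power series $\tilde A(z)$. Define \[ \tilde A_j(z) = e^{-\alpha j}\beta^{-j} z^{\alpha j}(1-jz)^{\gamma-\alpha j}\, e^{\alpha z^{-1}(\log(1-jz)+jz)}\,\tilde A\!\left(\frac{z}{1-jz}\right), \qquad \tilde A_H(z) = \sum_{j\geq 0}\tilde A_j(z)\,[x^j]H'(A(x)). \] Then \[ [z^n]H(A(z)) \approx n^{\alpha n}\beta^n n^\gamma\,\tilde A_H(n^{-1}). \]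
   Context: For a formal power series $\tilde F(z)$, $f_n \approx b_n\tilde F(n^{-1})$ means that for every fixed $r\geq 0$, $f_n = b_n\big(\sum_{\ell=0}^{r-1}[z^\ell]\tilde F(z)\,n^{-\ell} + O(n^{-r})\big)$ as $n\to\infty$. $[x^j]F$ denotes the coefficient of $x^j$ in the formal power series $F$; $H(A(x))$ and $H'(A(x))$ are formal compositions (well defined since $A(0)=0$). The sum defining $\tilde A_H$ is a well-defined formal power series since $\tilde A_j(z)$ has valuation at least $\alpha j$. *)

(* Defs.v *)
From Stdlib Require Import Reals Lra Lia Arith Factorial.
Open Scope R_scope.

Fixpoint sumR (n : nat) (f : nat -> R) : R :=
  match n with O => 0 | S m => sumR m f + f m end.
Fixpoint prodR (n : nat) (f : nat -> R) : R :=
  match n with O => 1 | S m => prodR m f * f m end.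

Definition fps := nat -> R.

Definition fps_one : fps := fun n => match n with O => 1 | _ => 0 end.
Definition fps_add (f g : fps) : fps := fun n => f n + g n.
Definition fps_scale (c : R) (f : fps) : fps := fun n => c * f n.
Definition fps_mul (f g : fps) : fps :=
  fun n => sumR (S n) (fun i => f i * g (n - i)%nat).
Fixpoint fps_pow (f : fps) (k : nat) : fps :=
  match k with O => fps_one | S m => fps_mul f (fps_pow f m) end.
Definition fps_shift (k : nat) (f : fps) : fps :=
  fun n => if Nat.leb k n then f (n - k)%nat else 0.
(* division by z (used only for series with zero constant term) *)
Definition fps_divz (f : fps) : fps := fun n => f (S n).
Definition fps_deriv (f : fps) : fps := fun n => INR (S n) * f (S n).
(* formal composition f(g(z)), meaningful when g 0 = 0:
   [z^n] f(g) = sum_{k<=n} f_k [z^n] g^k *)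
Definition fps_comp (f g : fps) : fps :=
  fun n => sumR (S n) (fun k => f k * fps_pow g k n).
(* formal exponential exp(s), meaningful when s 0 = 0 *)
Definition fps_exp (s : fps) : fps :=
  fun n => sumR (S n) (fun m => fps_pow s m n / INR (fact m)).
Definition gbinom (p : R) (k : nat) : R :=
  prodR k (fun i => p - INR i) / INR (fact k).
(* (1 + c z)^p = sum_k binom(p,k) c^k z^k  (formal binomial series) *)
Definition fps_binom (c p : R) : fps := fun k => gbinom p k * c ^ k.
(* log(1 - c z) = - sum_{k>=1} c^k z^k / k *)
Definition fps_log1m (c : R) : fps :=
  fun k => match k with O => 0 | _ => - (c ^ k) / INR k end.
Definition fps_lin (c : R) : fps :=
  fun k => match k with 1%nat => c | _ => 0 end.
Definition fps_geom (c : R) : fps := fun k => c ^ k.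

(* f_n ≈ b_n F(1/n): for every r, f_n = b_n (sum_{l<r} F_l n^{-l} + O(n^{-r})) *)
Definition asymp_approx (f b : nat -> R) (F : fps) : Prop :=
  forall r : nat, exists C : R, exists N : nat, forall n : nat, (N <= n)%nat ->
    exists e : R,
      f n = b n * (sumR r (fun l => F l * / (INR n ^ l)) + e)
      /\ Rabs e <= C * / (INR n ^ r).

(* H analytic at 0, given by its Taylor coefficients h: positive radius *)
Definition analytic_at0 (h : fps) : Prop :=
  exists rho : R, 0 < rho /\ exists M : R, forall k : nat, Rabs (h k) * rho ^ k <= M.

Definition scale_seq (alpha : nat) (beta gamma : R) (n : nat) : R :=
  INR n ^ (alpha * n) * beta ^ n * Rpower (INR n) gamma.

Definition At_j (alpha : nat) (beta gamma : R) (At : fps) (j : nat) : fps :=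
  let a := INR alpha in
  let jr := INR j in
  fps_scale (exp (- a * jr) * / (beta ^ j))
    (fps_shift (alpha * j)
      (fps_mul (fps_binom (- jr) (gamma - a * jr))
        (fps_mul
          (fps_exp (fps_scale a (fps_divz (fps_add (fps_log1m jr) (fps_lin jr)))))
          (fps_comp At (fps_shift 1 (fps_geom jr)))))).

(* tilde A_H(z) = sum_{j>=0} tilde A_j(z) [x^j] H'(A(x)); since tilde A_j has
   valuation >= alpha j >= j, only j <= l contribute to [z^l]. *)
Definition At_H (alpha : nat) (beta gamma : R) (At h a : fps) : fps :=
  fun l => sumR (S l) (fun j => At_j alpha beta gamma At j l
                                 * fps_comp (fps_deriv h) a j).

(* Main.v *)
Require Import Defs.
From Stdlib Require Import Reals.
From Stdlib Require Import Lra Lia Arith Factorial FunctionalExtensionality ZArith.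
Open Scope R_scope.

Lemma sumR_ext n f g : (forall i, (i < n)%nat -> f i = g i) -> sumR n f = sumR n g.
Proof.
  induction n; intros H; simpl; auto.
  rewrite IHn by (intros; apply H; lia). rewrite H by lia. reflexivity.
Qed.

Lemma sumR_plus n f g : sumR n (fun i => f i + g i) = sumR n f + sumR n g.
Proof. induction n; simpl; [lra|]. rewrite IHn. lra. Qed.

Lemma sumR_minus n f g : sumR n (fun i => f i - g i) = sumR n f - sumR n g.
Proof. induction n; simpl; [lra|]. rewrite IHn. lra. Qed.

Lemma sumR_scal n c f : sumR n (fun i => c * f i) = c * sumR n f.
Proof. induction n; simpl; [lra|]. rewrite IHn. lra. Qed.

Lemma sumR_zero n f : (forall i, (i < n)%nat -> f i = 0) -> sumR n f = 0.
Proof. intros H. rewrite (sumR_ext n f (fun _ => 0)) by auto. induction n; simpl; [lra|].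
  rewrite IHn by (intros; apply H; lia). lra. Qed.

Lemma sumR_split m n f : sumR (m + n) f = sumR m f + sumR n (fun i => f (m + i)%nat).
Proof.
  induction n; simpl.
  - rewrite Nat.add_0_r. lra.
  - rewrite Nat.add_succ_r. simpl. rewrite IHn. lra.
Qed.

Lemma sumR_shift n f : sumR (S n) f = f 0%nat + sumR n (fun i => f (S i)).
Proof.
  induction n; simpl; [lra|]. simpl in IHn. rewrite IHn. lra.
Qed.

Lemma sumR_abs n f : Rabs (sumR n f) <= sumR n (fun i => Rabs (f i)).
Proof.
  induction n; simpl. rewrite Rabs_R0; lra.
  eapply Rle_trans. apply Rabs_triang. lra.
Qed.

Lemma sumR_le n f g : (forall i, (i < n)%nat -> f i <= g i) -> sumR n f <= sumR n g.
Proof.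
  induction n; intros H; simpl; [lra|].
  assert (sumR n f <= sumR n g) by (apply IHn; intros; apply H; lia).
  assert (f n <= g n) by (apply H; lia). lra.
Qed.

Lemma sumR_nonneg n f : (forall i, (i < n)%nat -> 0 <= f i) -> 0 <= sumR n f.
Proof.
  intros H. rewrite <- (sumR_zero n (fun _ => 0)) by auto. apply sumR_le. auto.
Qed.

Lemma sumR_swap n m f :
  sumR n (fun i => sumR m (fun j => f i j)) = sumR m (fun j => sumR n (fun i => f i j)).
Proof.
  induction n; simpl.
  - symmetry. apply sumR_zero. auto.
  - rewrite IHn. rewrite <- sumR_plus. reflexivity.
Qed.

Lemma sumR_tail m n f : (m <= n)%nat -> (forall i, (m <= i < n)%nat -> f i = 0) ->
  sumR n f = sumR m f.
Proof.
  intros Hmn H. replace n with (m + (n - m))%nat by lia.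
  rewrite sumR_split. rewrite (sumR_zero (n - m)). lra.
  intros; apply H; lia.
Qed.

Lemma sumR_rev n f : sumR n f = sumR n (fun i => f (n - 1 - i)%nat).
Proof.
  induction n; auto.
  rewrite (sumR_shift n (fun i => f (S n - 1 - i)%nat)).
  simpl sumR at 1. rewrite IHn.
  replace (n - 0 - 0)%nat with n by lia.
  rewrite Rplus_comm. f_equal; [f_equal; lia|]. apply sumR_ext. intros. f_equal. lia.
Qed.

Lemma sumR_bound n f B : (forall i, (i < n)%nat -> Rabs (f i) <= B) ->
  Rabs (sumR n f) <= INR n * B.
Proof.
  intros H. eapply Rle_trans. apply sumR_abs.
  induction n; cbn [sumR]. simpl; lra.
  assert (sumR n (fun i => Rabs (f i)) <= INR n * B) by (apply IHn; intros; apply H; lia).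
  assert (Rabs (f n) <= B) by (apply H; lia).
  replace (INR (S n)) with (INR n + 1) by (rewrite S_INR; reflexivity). lra.
Qed.

Lemma sumR_S n f : sumR (S n) f = sumR n f + f n.
Proof. reflexivity. Qed.

Lemma sumR_triangle N (g : nat -> nat -> R) :
  sumR N (fun m => sumR (S m) (fun i => g i (m - i)%nat)) =
  sumR N (fun i => sumR (N - i) (fun j => g i j)).
Proof.
  induction N; auto.
  rewrite (sumR_S N (fun m => sumR (S m) (fun i => g i (m - i)%nat))).
  rewrite (sumR_S N (fun i => sumR (S N - i) (fun j => g i j))).
  rewrite IHN.
  rewrite (sumR_ext N (fun i => sumR (S N - i) (fun j => g i j))
              (fun i => sumR (N - i) (fun j => g i j) + g i (N - i)%nat)).
  2:{ intros i Hi. replace (S N - i)%nat with (S (N - i)) by lia. reflexivity. }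
  rewrite sumR_plus. replace (S N - N)%nat with 1%nat by lia.
  rewrite sumR_S. replace (N - N)%nat with 0%nat by lia. simpl. lra.
Qed.

Lemma sumR_pos_le_sum n f k : (forall i, (i < n)%nat -> 0 <= f i) -> (k < n)%nat -> f k <= sumR n f.
Proof.
  induction n; intros H Hk. lia. simpl.
  destruct (Nat.eq_dec k n).
  - subst. assert (0 <= sumR n f) by (apply sumR_nonneg; intros; apply H; lia). lra.
  - assert (f k <= sumR n f) by (apply IHn; [intros; apply H; lia| lia]).
    assert (0 <= f n) by (apply H; lia). lra.
Qed.

Lemma fps_mul_comm F G : fps_mul F G = fps_mul G F.
Proof.
  apply functional_extensionality. intro n. unfold fps_mul.
  rewrite sumR_rev. apply sumR_ext. intros i Hi.
  replace (S n - 1 - i)%nat with (n - i)%nat by lia.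
  replace (n - (n - i))%nat with i by lia. lra.
Qed.

Lemma fps_mul_add_l F G H : fps_mul (fps_add F G) H = fps_add (fps_mul F H) (fps_mul G H).
Proof.
  apply functional_extensionality. intro n. unfold fps_mul, fps_add.
  rewrite <- sumR_plus. apply sumR_ext. intros. lra.
Qed.

Lemma fps_mul_add_r F G H : fps_mul H (fps_add F G) = fps_add (fps_mul H F) (fps_mul H G).
Proof.
  rewrite fps_mul_comm, fps_mul_add_l, (fps_mul_comm F), (fps_mul_comm G). reflexivity.
Qed.

Lemma fps_mul_scale_l c F G : fps_mul (fps_scale c F) G = fps_scale c (fps_mul F G).
Proof.
  apply functional_extensionality. intro n. unfold fps_mul, fps_scale.
  rewrite <- sumR_scal. apply sumR_ext. intros. lra.
Qed.

Lemma fps_mul_scale_r c F G : fps_mul G (fps_scale c F) = fps_scale c (fps_mul G F).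
Proof.
  rewrite fps_mul_comm, fps_mul_scale_l, fps_mul_comm. reflexivity.
Qed.

Lemma fps_mul_assoc F G H : fps_mul F (fps_mul G H) = fps_mul (fps_mul F G) H.
Proof.
  apply functional_extensionality. intro l. unfold fps_mul.
  pose proof (sumR_triangle (S l) (fun i j => F i * G j * H (l - i - j)%nat)) as T.
  cbv beta in T. symmetry.
  rewrite (sumR_ext (S l) _ (fun m => sumR (S m) (fun i => F i * G (m - i)%nat * H (l - i - (m - i))%nat))).
  2:{ intros m Hm. rewrite Rmult_comm, <- sumR_scal. apply sumR_ext. intros i Hi.
      replace (l - i - (m - i))%nat with (l - m)%nat by lia. lra. }
  rewrite T.
  apply sumR_ext. intros i Hi. rewrite <- sumR_scal.
  replace (S l - i)%nat with (S (l - i)) by lia. apply sumR_ext. intros j Hj. lra.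
Qed.

Lemma fps_mul_one_l F : fps_mul fps_one F = F.
Proof.
  apply functional_extensionality. intro n. unfold fps_mul.
  rewrite sumR_shift. rewrite sumR_zero. simpl. replace (n - 0)%nat with n by lia. lra.
  intros. simpl. lra.
Qed.

Lemma fps_mul_low m F G F' G' :
  (forall i, (i <= m)%nat -> F i = F' i) -> (forall i, (i <= m)%nat -> G i = G' i) ->
  forall q, (q <= m)%nat -> fps_mul F G q = fps_mul F' G' q.
Proof.
  intros HF HG q Hq. unfold fps_mul. apply sumR_ext. intros i Hi.
  rewrite HF, HG by lia. reflexivity.
Qed.

Lemma fps_pow_low m F F' :
  (forall i, (i <= m)%nat -> F i = F' i) ->
  forall k q, (q <= m)%nat -> fps_pow F k q = fps_pow F' k q.
Proof.
  intros HF k. induction k; intros q Hq; simpl; auto.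
  apply (fps_mul_low m); auto.
Qed.

Lemma fps_mul_val d e F G :
  (forall i, (i < d)%nat -> F i = 0) -> (forall i, (i < e)%nat -> G i = 0) ->
  forall q, (q < d + e)%nat -> fps_mul F G q = 0.
Proof.
  intros HF HG q Hq. unfold fps_mul. apply sumR_zero. intros i Hi.
  destruct (lt_dec i d). rewrite HF by lia. lra. rewrite HG by lia. lra.
Qed.

Lemma fps_pow_val F : F 0%nat = 0 -> forall k q, (q < k)%nat -> fps_pow F k q = 0.
Proof.
  intros H0 k. induction k; intros q Hq. lia. simpl.
  apply (fps_mul_val 1 k); auto. intros i Hi. replace i with 0%nat by lia. auto.
Qed.

Definition fps_abs (F : fps) : fps := fun n => Rabs (F n).

Lemma fps_mul_nonneg F G : (forall i, 0 <= F i) -> (forall i, 0 <= G i) -> forall q, 0 <= fps_mul F G q.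
Proof.
  intros. unfold fps_mul. apply sumR_nonneg. intros. apply Rmult_le_pos; auto.
Qed.

Lemma fps_pow_nonneg F : (forall i, 0 <= F i) -> forall k q, 0 <= fps_pow F k q.
Proof.
  intros H k. induction k; intros q; simpl.
  - unfold fps_one. destruct q; lra.
  - apply fps_mul_nonneg; auto.
Qed.

Lemma fps_mul_abs F G q : Rabs (fps_mul F G q) <= fps_mul (fps_abs F) (fps_abs G) q.
Proof.
  unfold fps_mul. eapply Rle_trans. apply sumR_abs. apply sumR_le. intros.
  unfold fps_abs. rewrite Rabs_mult. lra.
Qed.

Lemma fps_mul_mono F G F' G' : (forall i, 0 <= F i <= F' i) -> (forall i, 0 <= G i <= G' i) ->
  forall q, fps_mul F G q <= fps_mul F' G' q.
Proof.
  intros HF HG q. unfold fps_mul. apply sumR_le. intros i Hi.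
  destruct (HF i), (HG (q - i)%nat). apply Rmult_le_compat; auto.
Qed.

Lemma fps_pow_abs F k q : Rabs (fps_pow F k q) <= fps_pow (fps_abs F) k q.
Proof.
  revert q. induction k; intros q; simpl.
  - unfold fps_one. destruct q; rewrite ?Rabs_R1, ?Rabs_R0; lra.
  - eapply Rle_trans. apply fps_mul_abs. apply fps_mul_mono.
    + intros. unfold fps_abs. split; [apply Rabs_pos| lra].
    + intros. split. unfold fps_abs. apply Rabs_pos.
      apply IHk.
Qed.

Definition evz (r : nat) (F : fps) (z : R) : R := sumR r (fun l => F l * z ^ l).

Definition EXPr (x : nat -> R) (F : fps) (r : nat) : Prop :=
  exists C N, forall n, (N <= n)%nat -> Rabs (x n - evz r F (/ INR n)) <= C * (/ INR n) ^ r.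

Definition EXP (x : nat -> R) (F : fps) : Prop := forall r, EXPr x F r.

Lemma zn_pos n : (1 <= n)%nat -> 0 < / INR n.
Proof. intros. apply Rinv_0_lt_compat. apply lt_0_INR. lia. Qed.

Lemma zn_le1 n : (1 <= n)%nat -> / INR n <= 1.
Proof.
  intros. rewrite <- Rinv_1. apply Rinv_le_contravar. lra. apply (le_INR 1). lia.
Qed.

Lemma pow_le1 z k : 0 <= z <= 1 -> z ^ k <= 1.
Proof. intros. rewrite <- (pow1 k). apply pow_incr. lra. Qed.

Lemma pow_le_pow_small z a b : 0 <= z <= 1 -> (a <= b)%nat -> z ^ b <= z ^ a.
Proof.
  intros Hz Hab. replace b with (a + (b - a))%nat by lia. rewrite pow_add.
  rewrite <- (Rmult_1_r (z ^ a)) at 2. apply Rmult_le_compat_l. apply pow_le; lra.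
  apply pow_le1; lra.
Qed.

Definition sabs (r : nat) (F : fps) : R := sumR r (fun l => Rabs (F l)).

Lemma sabs_nonneg r F : 0 <= sabs r F.
Proof. apply sumR_nonneg. intros. apply Rabs_pos. Qed.

Lemma evz_bound r F z : 0 <= z <= 1 -> Rabs (evz r F z) <= sabs r F.
Proof.
  intros Hz. unfold evz, sabs. eapply Rle_trans. apply sumR_abs. apply sumR_le.
  intros i _. rewrite Rabs_mult. rewrite <- (Rmult_1_r (Rabs (F i))) at 2.
  apply Rmult_le_compat_l. apply Rabs_pos. rewrite <- RPow_abs.
  apply pow_le1. split. apply Rabs_pos. rewrite Rabs_right; lra.
Qed.

Lemma evz_tail r r' F z : 0 <= z <= 1 -> (r' <= r)%nat ->
  Rabs (evz r F z - evz r' F z) <= sabs r F * z ^ r'.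
Proof.
  intros Hz Hr. unfold evz.
  replace r with (r' + (r - r'))%nat at 1 by lia. rewrite sumR_split.
  replace (sumR r' (fun l : nat => F l * z ^ l) +
    sumR (r - r') (fun i : nat => F (r' + i)%nat * z ^ (r' + i)) - sumR r' (fun l : nat => F l * z ^ l))
   with (sumR (r - r') (fun i : nat => F (r' + i)%nat * z ^ (r' + i))) by ring.
  eapply Rle_trans. apply sumR_abs.
  eapply Rle_trans with (sumR (r - r') (fun i => Rabs (F (r' + i)%nat)) * z ^ r').
  - rewrite Rmult_comm, <- sumR_scal. apply sumR_le. intros i _.
    rewrite Rabs_mult, Rmult_comm. apply Rmult_le_compat_r. apply Rabs_pos.
    rewrite Rabs_right by (apply Rle_ge, pow_le; lra). apply pow_le_pow_small; auto; lia.
  - apply Rmult_le_compat_r. apply pow_le; lra.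
    unfold sabs. replace r with (r' + (r - r'))%nat at 2 by lia. rewrite sumR_split.
    assert (0 <= sumR r' (fun l => Rabs (F l))) by (apply sumR_nonneg; intros; apply Rabs_pos). lra.
Qed.

Lemma E_ext_fps x F G r : (forall l, (l < r)%nat -> F l = G l) -> EXPr x F r -> EXPr x G r.
Proof.
  intros H [C [N HC]]. exists C, N. intros n Hn.
  unfold evz. rewrite (sumR_ext r _ (fun l => F l * (/ INR n) ^ l)). apply HC; auto.
  intros. rewrite H; auto.
Qed.

Lemma E_ext_fun x y F r N0 : (forall n, (N0 <= n)%nat -> x n = y n) -> EXPr x F r -> EXPr y F r.
Proof.
  intros H [C [N HC]]. exists C, (Nat.max N N0). intros n Hn.
  rewrite <- H by lia. apply HC. lia.
Qed.

Lemma E_lower x F r r' : (r' <= r)%nat -> EXPr x F r -> EXPr x F r'.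
Proof.
  intros Hr [C [N HC]]. exists (Rabs C + sabs r F), (Nat.max N 1). intros n Hn.
  pose proof (zn_pos n ltac:(lia)). pose proof (zn_le1 n ltac:(lia)).
  specialize (HC n ltac:(lia)).
  pose proof (evz_tail r r' F (/ INR n) ltac:(lra) Hr).
  assert (C * (/ INR n) ^ r <= Rabs C * (/ INR n) ^ r') .
  { apply Rle_trans with (Rabs C * (/ INR n) ^ r).
    apply Rmult_le_compat_r. apply pow_le; lra. apply Rle_abs.
    apply Rmult_le_compat_l. apply Rabs_pos. apply pow_le_pow_small; [lra|auto]. }
  replace (x n - evz r' F (/ INR n)) with ((x n - evz r F (/ INR n)) + (evz r F (/ INR n) - evz r' F (/ INR n))) by ring.
  eapply Rle_trans. apply Rabs_triang. lra.
Qed.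

Lemma E_bound x F r : EXPr x F r -> exists B N, forall n, (N <= n)%nat -> Rabs (x n) <= B.
Proof.
  intros [C [N HC]]. exists (Rabs C + sabs r F), (Nat.max N 1). intros n Hn.
  pose proof (zn_pos n ltac:(lia)). pose proof (zn_le1 n ltac:(lia)).
  specialize (HC n ltac:(lia)).
  pose proof (evz_bound r F (/ INR n) ltac:(lra)).
  assert (C * (/ INR n) ^ r <= Rabs C).
  { apply Rle_trans with (Rabs C * (/ INR n) ^ r).
    apply Rmult_le_compat_r. apply pow_le; lra. apply Rle_abs.
    rewrite <- (Rmult_1_r (Rabs C)) at 2. apply Rmult_le_compat_l. apply Rabs_pos. apply pow_le1; lra. }
  replace (x n) with ((x n - evz r F (/ INR n)) + evz r F (/ INR n)) by ring.
  eapply Rle_trans. apply Rabs_triang. lra.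
Qed.

Lemma E_add x y F G r : EXPr x F r -> EXPr y G r -> EXPr (fun n => x n + y n) (fps_add F G) r.
Proof.
  intros [C1 [N1 H1]] [C2 [N2 H2]]. exists (C1 + C2), (Nat.max N1 N2). intros n Hn.
  specialize (H1 n ltac:(lia)). specialize (H2 n ltac:(lia)).
  unfold evz, fps_add in *.
  rewrite (sumR_ext r _ (fun l => F l * (/ INR n) ^ l + G l * (/ INR n) ^ l)) by (intros; ring).
  rewrite sumR_plus.
  replace (x n + y n - (sumR r (fun l => F l * (/ INR n) ^ l) + sumR r (fun l => G l * (/ INR n) ^ l)))
    with ((x n - sumR r (fun l => F l * (/ INR n) ^ l)) + (y n - sumR r (fun l => G l * (/ INR n) ^ l))) by ring.
  eapply Rle_trans. apply Rabs_triang. lra.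
Qed.

Lemma E_scale x F c r : EXPr x F r -> EXPr (fun n => c * x n) (fps_scale c F) r.
Proof.
  intros [C [N H]]. exists (Rabs c * C), N. intros n Hn. specialize (H n Hn).
  unfold evz, fps_scale in *.
  rewrite (sumR_ext r _ (fun l => c * (F l * (/ INR n) ^ l))) by (intros; ring).
  rewrite sumR_scal. rewrite <- Rmult_minus_distr_l, Rabs_mult, Rmult_assoc.
  apply Rmult_le_compat_l. apply Rabs_pos. auto.
Qed.

Lemma E_zero x r : (exists C N, forall n, (N <= n)%nat -> Rabs (x n) <= C * (/ INR n) ^ r) ->
  EXPr x (fun _ => 0) r.
Proof.
  intros [C [N H]]. exists C, N. intros n Hn. unfold evz.
  rewrite sumR_zero by (intros; ring). rewrite Rminus_0_r. auto.
Qed.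

Lemma evz_one c r z : (1 <= r)%nat -> evz r (fps_scale c fps_one) z = c.
Proof.
  intros Hr. destruct r. lia. unfold evz. rewrite sumR_shift. rewrite sumR_zero.
  unfold fps_scale, fps_one. simpl. ring. intros. unfold fps_scale, fps_one. ring.
Qed.

Lemma E_const c r : EXPr (fun _ => c) (fps_scale c fps_one) r.
Proof.
  exists (Rabs c), 1%nat. intros n Hn. destruct r.
  - unfold evz. simpl. rewrite Rminus_0_r. lra.
  - rewrite evz_one by lia. rewrite Rminus_diag, Rabs_R0.
    apply Rmult_le_pos. apply Rabs_pos. apply pow_le. left; apply zn_pos; lia.
Qed.

Lemma evz_mul_diff r F G z : 0 <= z <= 1 ->
  Rabs (evz r F z * evz r G z - evz r (fps_mul F G) z) <= sabs r F * sabs r G * z ^ r.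
Proof.
  intros Hz. unfold evz.
  assert (E1 : sumR r (fun l => F l * z ^ l) * sumR r (fun l => G l * z ^ l) =
    sumR r (fun i => sumR r (fun j => F i * G j * z ^ (i + j)))).
  { rewrite Rmult_comm, <- sumR_scal. apply sumR_ext. intros i _.
    rewrite Rmult_comm, <- sumR_scal. apply sumR_ext. intros j _. rewrite pow_add. ring. }
  assert (E2 : sumR r (fun l => fps_mul F G l * z ^ l) =
    sumR r (fun i => sumR (r - i) (fun j => F i * G j * z ^ (i + j)))).
  { rewrite <- sumR_triangle. apply sumR_ext. intros m Hm. unfold fps_mul.
    rewrite Rmult_comm, <- sumR_scal. apply sumR_ext. intros i Hi.
    replace (i + (m - i))%nat with m by lia. ring. }
  rewrite E1, E2, <- sumR_minus.
  rewrite (sumR_ext r _ (fun i => sumR i (fun t => F i * G (r - i + t)%nat * z ^ (i + (r - i + t))))).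
  2:{ intros i Hi. replace r with ((r - i) + i)%nat at 1 by lia. rewrite sumR_split. ring. }
  unfold sabs. match goal with |- _ <= ?A * ?B * ?C => replace (A * B * C) with (sumR r (fun i => Rabs (F i) * (B * C))) by (rewrite (sumR_ext r _ (fun i => (B * C) * Rabs (F i))) by (intros; ring); rewrite sumR_scal; ring) end.
  eapply Rle_trans. apply sumR_abs. apply sumR_le. intros i Hi.
  eapply Rle_trans. apply sumR_abs.
  apply Rle_trans with (sumR i (fun t => Rabs (F i) * (Rabs (G (r - i + t)%nat) * z ^ r))).
  { apply sumR_le. intros t Ht. rewrite !Rabs_mult.
    rewrite (Rabs_right (z ^ _)) by (apply Rle_ge, pow_le; lra).
    rewrite Rmult_assoc. apply Rmult_le_compat_l. apply Rabs_pos.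
    apply Rmult_le_compat_l. apply Rabs_pos. apply pow_le_pow_small; auto; lia. }
  rewrite sumR_scal. replace (Rabs (F i) * (sumR r (fun l => Rabs (G l)) * z ^ r))
   with (Rabs (F i) * (z ^ r * sumR r (fun l => Rabs (G l)))) by ring.
  apply Rmult_le_compat_l. apply Rabs_pos.
  rewrite (sumR_ext i _ (fun t => z ^ r * Rabs (G (r - i + t)%nat))) by (intros; ring).
  rewrite sumR_scal. apply Rmult_le_compat_l. apply pow_le; lra.
  pose proof (sumR_split (r - i) i (fun l => Rabs (G l))) as Hs. replace (r - i + i)%nat with r in Hs by lia. rewrite Hs.
  assert (0 <= sumR (r - i) (fun l => Rabs (G l))) by (apply sumR_nonneg; intros; apply Rabs_pos).
  lra.
Qed.

Lemma E_mul x y F G r : EXPr x F r -> EXPr y G r -> EXPr (fun n => x n * y n) (fps_mul F G) r.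
Proof.
  intros Hx Hy.
  destruct (E_bound y G r Hy) as [B [Nb Hb]].
  destruct Hx as [C1 [N1 H1]], Hy as [C2 [N2 H2]].
  exists (Rabs C1 * B + sabs r F * Rabs C2 + sabs r F * sabs r G), (Nat.max (Nat.max N1 N2) (Nat.max Nb 1)).
  intros n Hn.
  pose proof (zn_pos n ltac:(lia)). pose proof (zn_le1 n ltac:(lia)).
  set (z := / INR n) in *.
  specialize (H1 n ltac:(lia)). specialize (H2 n ltac:(lia)). specialize (Hb n ltac:(lia)).
  pose proof (evz_mul_diff r F G z ltac:(lra)).
  pose proof (evz_bound r F z ltac:(lra)).
  replace (x n * y n - evz r (fps_mul F G) z) with
    ((x n - evz r F z) * y n + evz r F z * (y n - evz r G z) + (evz r F z * evz r G z - evz r (fps_mul F G) z)) by ring.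
  assert (Hzr : 0 <= z ^ r) by (apply pow_le; lra).
  assert (A1 : Rabs ((x n - evz r F z) * y n) <= Rabs C1 * B * z ^ r).
  { rewrite Rabs_mult. replace (Rabs C1 * B * z ^ r) with ((Rabs C1 * z ^ r) * B) by ring.
    apply Rmult_le_compat; try apply Rabs_pos; auto.
    eapply Rle_trans. apply H1. apply Rmult_le_compat_r; auto. apply Rle_abs. }
  assert (A2 : Rabs (evz r F z * (y n - evz r G z)) <= sabs r F * Rabs C2 * z ^ r).
  { rewrite Rabs_mult, Rmult_assoc. apply Rmult_le_compat; try apply Rabs_pos; auto.
    eapply Rle_trans. apply H2. apply Rmult_le_compat_r; auto. apply Rle_abs. }
  eapply Rle_trans. apply Rabs_triang.
  eapply Rle_trans. apply Rplus_le_compat_r. apply Rabs_triang.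
  lra.
Qed.

Lemma E_pow x F k r : EXPr x F r -> EXPr (fun n => x n ^ k) (fps_pow F k) r.
Proof.
  intros H. induction k.
  - simpl. eapply E_ext_fps. 2: apply (E_const 1). intros. unfold fps_scale. ring.
  - simpl. apply E_mul; auto.
Qed.

Lemma E_sum (J : nat) (x : nat -> nat -> R) (F : nat -> fps) r :
  (forall j, (j < J)%nat -> EXPr (x j) (F j) r) ->
  EXPr (fun n => sumR J (fun j => x j n)) (fun l => sumR J (fun j => F j l)) r.
Proof.
  induction J; intros H.
  - simpl. apply E_zero. exists 0, 0%nat. intros. rewrite Rabs_R0. lra.
  - simpl. eapply E_ext_fps. 2: apply E_add. 3: apply H; lia. 2: apply IHJ; intros; apply H; lia.
    intros. unfold fps_add. reflexivity.
Qed.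

Lemma nat_above (x : R) : exists N : nat, x < INR N.
Proof.
  destruct (archimed x) as [H1 H2].
  destruct (Z_lt_le_dec (up x) 0).
  - exists 0%nat. simpl. pose proof (IZR_lt _ _ l). simpl in *. lra.
  - exists (Z.to_nat (up x)). rewrite INR_IZR_INZ. rewrite Z2Nat.id by lia. lra.
Qed.

Lemma eventually_small (C : R) : exists N : nat, forall n, (N <= n)%nat -> C * / INR n <= 1.
Proof.
  destruct (nat_above C) as [N HN]. exists (Nat.max N 1). intros n Hn.
  assert (0 < INR n) by (apply lt_0_INR; lia).
  assert (INR N <= INR n) by (apply le_INR; lia).
  apply Rmult_le_reg_r with (INR n); auto. rewrite Rmult_assoc, Rinv_l by lra. lra.
Qed.

Lemma evz_shift k m F z : evz (k + m) (fps_shift k F) z = z ^ k * evz m F z.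
Proof.
  unfold evz. rewrite sumR_split. rewrite sumR_zero.
  2:{ intros i Hi. unfold fps_shift. destruct (Nat.leb k i) eqn:E.
      apply Nat.leb_le in E. lia. ring. }
  rewrite <- sumR_scal. rewrite Rplus_0_l. apply sumR_ext. intros i Hi.
  unfold fps_shift. destruct (Nat.leb k (k + i)) eqn:E. 2:{ apply Nat.leb_gt in E. lia. }
  replace (k + i - k)%nat with i by lia. rewrite pow_add. ring.
Qed.

Lemma E_shift x F k : EXP x F -> EXP (fun n => x n * (/ INR n) ^ k) (fps_shift k F).
Proof.
  intros H r. destruct (le_lt_dec r k) as [Hrk|Hrk].
  - destruct (E_bound x F 0 (H 0%nat)) as [B [N HB]].
    apply E_ext_fps with (fun _ => 0).
    { intros l Hl. unfold fps_shift. destruct (Nat.leb k l) eqn:E. apply Nat.leb_le in E. lia. reflexivity. }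
    apply E_zero. exists B, (Nat.max N 1). intros n Hn.
    pose proof (zn_pos n ltac:(lia)). pose proof (zn_le1 n ltac:(lia)).
    rewrite Rabs_mult. rewrite (Rabs_right (_ ^ k)) by (apply Rle_ge, pow_le; lra).
    apply Rle_trans with (B * (/ INR n) ^ k). apply Rmult_le_compat_r. apply pow_le; lra. apply HB; lia.
    apply Rmult_le_compat_l. specialize (HB n ltac:(lia)). pose proof (Rabs_pos (x n)). lra.
    apply pow_le_pow_small; [lra | auto].
  - destruct (H (r - k)%nat) as [C [N HC]]. exists C, (Nat.max N 1). intros n Hn.
    pose proof (zn_pos n ltac:(lia)).
    replace r with (k + (r - k))%nat at 1 by lia. rewrite evz_shift.
    replace (x n * (/ INR n) ^ k - (/ INR n) ^ k * evz (r - k) F (/ INR n))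
      with ((/ INR n) ^ k * (x n - evz (r - k) F (/ INR n))) by ring.
    rewrite Rabs_mult, Rabs_right by (apply Rle_ge, pow_le; lra).
    replace r with (k + (r - k))%nat at 2 by lia. rewrite pow_add.
    replace (C * ((/ INR n) ^ k * (/ INR n) ^ (r - k))) with ((/ INR n) ^ k * (C * (/ INR n) ^ (r - k))) by ring.
    apply Rmult_le_compat_l. apply pow_le; lra. apply HC; lia.
Qed.

Lemma evz_divz r F z : F 0%nat = 0 -> evz (S r) F z = z * evz r (fps_divz F) z.
Proof.
  intros H0. unfold evz. rewrite sumR_shift. rewrite H0. rewrite <- sumR_scal.
  rewrite Rmult_0_l, Rplus_0_l. apply sumR_ext. intros. unfold fps_divz. simpl. ring.
Qed.

Lemma E_divz x F : F 0%nat = 0 -> EXP x F -> EXP (fun n => INR n * x n) (fps_divz F).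
Proof.
  intros H0 H r. destruct (H (S r)) as [C [N HC]]. exists C, (Nat.max N 1). intros n Hn.
  assert (0 < INR n) by (apply lt_0_INR; lia).
  specialize (HC n ltac:(lia)). rewrite evz_divz in HC by auto.
  replace (INR n * x n - evz r (fps_divz F) (/ INR n)) with
    (INR n * (x n - / INR n * evz r (fps_divz F) (/ INR n))) by (field; lra).
  rewrite Rabs_mult, Rabs_right by lra.
  apply Rmult_le_reg_l with (/ INR n). apply Rinv_0_lt_compat; lra.
  rewrite <- Rmult_assoc, Rinv_l, Rmult_1_l by lra. simpl in HC. lra.
Qed.

Lemma E_lin c : EXP (fun n => c * / INR n) (fps_lin c).
Proof.
  intros r. exists (Rabs c), 1%nat. intros n Hn.
  pose proof (zn_pos n Hn). pose proof (zn_le1 n Hn).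
  destruct r as [|[|r]].
  - unfold evz. simpl. rewrite Rminus_0_r, Rabs_mult, (Rabs_right (/ INR n)) by lra.
    rewrite Rmult_1_r. rewrite <- (Rmult_1_r (Rabs c)) at 2. apply Rmult_le_compat_l. apply Rabs_pos. lra.
  - unfold evz. simpl. unfold fps_lin. rewrite Rmult_0_l, Rplus_0_l, Rminus_0_r, Rabs_mult, (Rabs_right (/ INR n)) by lra. lra.
  - unfold evz. rewrite sumR_shift, sumR_shift, sumR_zero.
    + unfold fps_lin. simpl. rewrite Rabs_right. 2: lra. replace (c * / INR n - (0 * 1 + (c * (/ INR n * 1) + 0))) with 0 by ring.
      apply Rmult_le_pos. apply Rabs_pos. apply (pow_le _ (S (S r))); lra.
    + intros. unfold fps_lin. ring.
Qed.

Lemma geom_sum u m : (1 - u) * sumR m (fun i => u ^ i) = 1 - u ^ m.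
Proof. induction m; simpl. ring. rewrite Rmult_plus_distr_l, IHm. ring. Qed.

Lemma evz_geom r c z : evz r (fps_geom c) z = sumR r (fun i => (c * z) ^ i).
Proof. unfold evz, fps_geom. apply sumR_ext. intros. rewrite Rpow_mult_distr. ring. Qed.

Lemma E_geom (j : nat) : EXP (fun n => / (1 - INR j * / INR n)) (fps_geom (INR j)).
Proof.
  intros r. exists (2 * INR j ^ r), (Nat.max (2 * j) 1). intros n Hn.
  pose proof (zn_pos n ltac:(lia)).
  assert (Hn' : 0 < INR n) by (apply lt_0_INR; lia).
  assert (Hu : 0 <= INR j * / INR n <= / 2).
  { split. apply Rmult_le_pos. apply pos_INR. lra.
    apply Rmult_le_reg_r with (INR n); auto. rewrite Rmult_assoc, Rinv_l by lra.
    assert (2 * INR j <= INR n). { replace (2 * INR j) with (INR (2 * j)) by (rewrite mult_INR; simpl; ring). apply le_INR. lia. } lra. }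
  rewrite evz_geom. set (u := INR j * / INR n) in *.
  assert (E : / (1 - u) - sumR r (fun i => u ^ i) = u ^ r / (1 - u)).
  { apply Rmult_eq_reg_l with (1 - u). 2: lra.
    rewrite Rmult_minus_distr_l, geom_sum. field. lra. }
  rewrite E. unfold Rdiv. rewrite Rabs_mult. rewrite Rabs_right by (apply Rle_ge, pow_le; lra).
  rewrite Rabs_right by (apply Rle_ge, Rlt_le, Rinv_0_lt_compat; lra).
  unfold u in *. rewrite Rpow_mult_distr.
  assert (/ (1 - INR j * / INR n) <= 2).
  { replace 2 with (/ / 2) by field. apply Rinv_le_contravar. lra. lra. }
  assert (0 <= INR j ^ r * (/ INR n) ^ r) by (apply Rmult_le_pos; apply pow_le; [apply pos_INR| lra]).
  replace (2 * INR j ^ r * (/ INR n) ^ r) with (INR j ^ r * (/ INR n) ^ r * 2) by ring.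
  apply Rmult_le_compat_l; auto.
Qed.

Lemma E_inv_shift (j : nat) : EXP (fun n => / INR (n - j)) (fps_shift 1 (fps_geom (INR j))).
Proof.
  intros r. eapply E_ext_fun. 2: apply (E_shift _ _ 1 (E_geom j)).
  instantiate (1 := S j). intros n Hn. simpl.
  rewrite minus_INR by lia.
  assert (INR j < INR n) by (apply lt_INR; lia).
  assert (0 < INR n) by (apply lt_0_INR; lia).
  field. split; lra.
Qed.

Lemma E_reparam x F (j : nat) : EXP x F ->
  EXP (fun n => x (n - j)%nat) (fps_comp F (fps_shift 1 (fps_geom (INR j)))).
Proof.
  intros H r. set (g := fps_shift 1 (fps_geom (INR j))).
  assert (Hg0 : g 0%nat = 0) by (unfold g, fps_shift; simpl; reflexivity).
  set (y := fun n => evz r F (/ INR (n - j))).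
  assert (Hy : EXPr y (fun q => sumR r (fun l => fps_scale (F l) (fps_pow g l) q)) r).
  { unfold y, evz. apply E_sum. intros l Hl. apply E_scale. apply E_pow. apply E_inv_shift. }
  destruct (H r) as [C [N HC]].
  assert (He : EXPr (fun n => x (n - j)%nat - y n) (fun _ => 0) r).
  { apply E_zero. exists (C * 2 ^ r), (Nat.max (N + j) (Nat.max (2 * j) 1)). intros n Hn.
    specialize (HC (n - j)%nat ltac:(lia)). unfold y.
    assert (Hv : 0 < / INR (n - j)) by (apply zn_pos; lia).
    assert (Hv2 : / INR (n - j) <= 2 * / INR n).
    { assert (0 < INR (n - j)) by (apply lt_0_INR; lia). assert (0 < INR n) by (apply lt_0_INR; lia).
      assert (INR n <= 2 * INR (n - j)).
      { replace (2 * INR (n - j)) with (INR (2 * (n - j))) by (rewrite mult_INR; simpl; ring). apply le_INR. lia. }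
      apply Rmult_le_reg_l with (INR n * INR (n - j)). nra. field_simplify; try lra. }
    assert (C >= 0).
    { pose proof (Rabs_pos (x (n - j)%nat - evz r F (/ INR (n - j)))).
      pose proof (pow_lt _ r Hv). nra. }
    eapply Rle_trans. apply HC. rewrite Rmult_assoc. apply Rmult_le_compat_l. lra.
    rewrite <- Rpow_mult_distr. apply pow_incr. lra. }
  eapply E_ext_fun with (N0 := 0%nat). 2: eapply E_ext_fps. 3: apply (E_add _ _ _ _ _ Hy He).
  - intros. simpl. ring.
  - intros q Hq. unfold fps_add, fps_comp. rewrite Rplus_0_r.
    rewrite (sumR_tail (S q) r). 2: lia.
    + apply sumR_ext. intros. unfold fps_scale. reflexivity.
    + intros i Hi. unfold fps_scale. rewrite (fps_pow_val g Hg0 i q) by lia. ring.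
Qed.

Lemma ev_evz r F n : sumR r (fun l => F l * / (INR n ^ l)) = evz r F (/ INR n).
Proof. unfold evz. apply sumR_ext. intros. rewrite pow_inv. reflexivity. Qed.

Lemma asymp_to_E f b F : (forall n, (1 <= n)%nat -> b n <> 0) -> asymp_approx f b F ->
  EXP (fun n => f n / b n) F.
Proof.
  intros Hb H r. destruct (H r) as [C [N HC]]. exists C, (Nat.max N 1). intros n Hn.
  destruct (HC n ltac:(lia)) as [e [E1 E2]]. rewrite E1. rewrite ev_evz.
  specialize (Hb n ltac:(lia)).
  replace (b n * (evz r F (/ INR n) + e) / b n - evz r F (/ INR n)) with e by (field; auto).
  rewrite pow_inv. auto.
Qed.

Lemma E_to_asymp f b F : (forall n, (1 <= n)%nat -> b n <> 0) -> EXP (fun n => f n / b n) F ->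
  asymp_approx f b F.
Proof.
  intros Hb H r. destruct (H r) as [C [N HC]]. exists C, (Nat.max N 1). intros n Hn.
  exists (f n / b n - evz r F (/ INR n)). split.
  - rewrite ev_evz. specialize (Hb n ltac:(lia)). field. auto.
  - rewrite <- pow_inv. apply HC. lia.
Qed.

Lemma exp_le_mono x y : x <= y -> exp x <= exp y.
Proof. intros [H|H]. left; apply exp_increasing; auto. subst; lra. Qed.

Lemma ln_le_mono x y : 0 < x -> x <= y -> ln x <= ln y.
Proof. intros H [H'|H']. left; apply ln_increasing; auto. subst; lra. Qed.

Lemma ln_le_sub1 x : 0 < x -> ln x <= x - 1.
Proof. intros H. pose proof (exp_ineq1_le (ln x)). rewrite exp_ln in H0 by auto. lra. Qed.

Lemma MVT_bound f f' a b K : a <= b ->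
  (forall t, a <= t <= b -> derivable_pt_lim f t (f' t)) ->
  (forall t, a <= t <= b -> Rabs (f' t) <= K) ->
  Rabs (f b - f a) <= K * (b - a).
Proof.
  intros [Hab|Hab] Hd Hk.
  - destruct (MVT_cor2 f f' a b Hab Hd) as [c [Hc1 Hc2]]. rewrite Hc1.
    rewrite Rabs_mult, (Rabs_right (b - a)) by lra. apply Rmult_le_compat_r. lra. apply Hk. lra.
  - subst. rewrite Rminus_diag, Rabs_R0.
    assert (0 <= K) by (eapply Rle_trans; [apply Rabs_pos| apply (Hk b); lra]). lra.
Qed.

Lemma deriv_ext f g x l : (forall t, f t = g t) -> derivable_pt_lim f x l -> derivable_pt_lim g x l.
Proof.
  intros H. replace g with f; auto. apply functional_extensionality. auto.
Qed.

Lemma deriv_sumR n (f : nat -> R -> R) (f' : nat -> R) y :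
  (forall m, (m < n)%nat -> derivable_pt_lim (f m) y (f' m)) ->
  derivable_pt_lim (fun t => sumR n (fun m => f m t)) y (sumR n f').
Proof.
  induction n; intros H.
  - simpl. apply (deriv_ext (fct_cte 0)). intros; reflexivity. apply derivable_pt_lim_const.
  - simpl. apply (deriv_ext ((fun t => sumR n (fun m => f m t)) + f n)%F).
    intros; reflexivity. apply derivable_pt_lim_plus. apply IHn. intros; apply H; lia. apply H; lia.
Qed.

Definition expT (r : nat) (y : R) : R := sumR r (fun m => y ^ m / INR (fact m)).

Lemma expT_deriv r y : derivable_pt_lim (expT (S r)) y (expT r y).
Proof.
  unfold expT.
  apply (deriv_ext (fun t => sumR (S r) (fun m => (fun m t => t ^ m * / INR (fact m)) m t))).
  intros; reflexivity.
  replace (sumR r (fun m => y ^ m / INR (fact m))) with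
    (sumR (S r) (fun m => INR m * y ^ Nat.pred m * / INR (fact m))).
  - apply deriv_sumR. intros m _.
    apply (deriv_ext ((fun t => t ^ m) * fct_cte (/ INR (fact m)))%F). intros; reflexivity.
    replace (INR m * y ^ Nat.pred m * / INR (fact m)) with
      (INR m * y ^ Nat.pred m * fct_cte (/ INR (fact m)) y + y ^ m * 0) by (unfold fct_cte; ring).
    apply derivable_pt_lim_mult. apply derivable_pt_lim_pow. apply derivable_pt_lim_const.
  - rewrite sumR_shift. simpl INR at 1. rewrite Rmult_0_l, Rmult_0_l, Rplus_0_l.
    apply sumR_ext. intros i _. simpl Nat.pred. rewrite fact_simpl, mult_INR.
    assert (0 < INR (fact i)) by (apply lt_0_INR, lt_O_fact).
    assert (0 < INR (S i)) by (apply lt_0_INR; lia).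
    field. lra.
Qed.

Lemma exp_rem r y : -1 <= y <= 0 -> Rabs (exp y - expT r y) <= (- y) ^ r.
Proof.
  revert y. induction r; intros y Hy.
  - unfold expT. simpl. rewrite Rminus_0_r. rewrite Rabs_right by (left; apply exp_pos).
    rewrite <- exp_0. apply exp_le_mono. lra.
  - set (g := fun t => exp t - expT (S r) t).
    assert (g0 : g 0 = 0).
    { unfold g, expT. rewrite sumR_shift. rewrite sumR_zero. rewrite exp_0. simpl. unfold Rdiv. rewrite Rinv_1. ring.
      intros. unfold Rdiv. rewrite pow_i by lia. ring. }
    pose proof (MVT_bound g (fun t => exp t - expT r t) y 0 ((- y) ^ r) ltac:(lra)).
    assert (Hb : Rabs (g 0 - g y) <= (- y) ^ r * (0 - y)).
    { apply H.
      - intros t Ht. unfold g. apply (derivable_pt_lim_minus exp (expT (S r))).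
        apply derivable_pt_lim_exp. apply expT_deriv.
      - intros t Ht. eapply Rle_trans. apply IHr. lra. apply pow_incr. lra. }
    rewrite g0 in Hb. rewrite Rminus_0_l, Rabs_Ropp in Hb. unfold g in Hb.
    simpl. replace (-y * (-y) ^ r) with ((- y) ^ r * (0 - y)) by ring. auto.
Qed.

Definition logT (r : nat) (u : R) : R := sumR r (fun k => fps_log1m 1 k * u ^ k).

Lemma logT_deriv r u : (1 <= r)%nat ->
  derivable_pt_lim (logT r) u (- sumR (r - 1) (fun i => u ^ i)).
Proof.
  intros Hr. unfold logT.
  apply (deriv_ext (fun t => sumR r (fun m => (fun m t => t ^ m * fps_log1m 1 m) m t))).
  intros; apply sumR_ext; intros; ring.
  replace (- sumR (r - 1) (fun i => u ^ i)) with
    (sumR r (fun m => INR m * u ^ Nat.pred m * fps_log1m 1 m)).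
  - apply deriv_sumR. intros m _.
    apply (deriv_ext ((fun t => t ^ m) * fct_cte (fps_log1m 1 m))%F). intros; reflexivity.
    replace (INR m * u ^ Nat.pred m * fps_log1m 1 m) with
      (INR m * u ^ Nat.pred m * fct_cte (fps_log1m 1 m) u + u ^ m * 0) by (unfold fct_cte; ring).
    apply derivable_pt_lim_mult. apply derivable_pt_lim_pow. apply derivable_pt_lim_const.
  - destruct r. lia. rewrite sumR_shift. simpl INR at 1. rewrite !Rmult_0_l, Rplus_0_l.
    replace (S r - 1)%nat with r by lia. replace (- sumR r (fun i => u ^ i)) with (-1 * sumR r (fun i => u ^ i)) by ring. rewrite <- (sumR_scal r (-1) (fun i => u ^ i)).
    idtac.
    apply sumR_ext. intros i _. simpl Nat.pred. unfold fps_log1m. rewrite pow1.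
    assert (0 < INR (S i)) by (apply lt_0_INR; lia). field. lra.
Qed.

Lemma log_rem r u : (1 <= r)%nat -> 0 <= u <= / 2 -> Rabs (ln (1 - u) - logT r u) <= 2 * u ^ r.
Proof.
  intros Hr Hu.
  set (g := fun t => ln (1 - t) - logT r t).
  assert (g0 : g 0 = 0).
  { unfold g, logT. rewrite Rminus_0_r, ln_1. rewrite sumR_zero. ring.
    intros i _. destruct i. unfold fps_log1m. ring. rewrite pow_i by lia. ring. }
  pose proof (MVT_bound g (fun t => / (1 - t) * (0 - 1) - - sumR (r - 1) (fun i => t ^ i)) 0 u (2 * u ^ (r - 1)) ltac:(lra)).
  assert (Hb : Rabs (g u - g 0) <= 2 * u ^ (r - 1) * (u - 0)).
  { apply H.
    - intros t Ht. unfold g. apply (derivable_pt_lim_minus (fun t => ln (1 - t)) (logT r)).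
      + apply (derivable_pt_lim_comp (fun t => 1 - t) ln).
        apply (deriv_ext (fct_cte 1 - id)%F). intros; reflexivity.
        apply derivable_pt_lim_minus. apply derivable_pt_lim_const. apply derivable_pt_lim_id.
        apply derivable_pt_lim_ln. lra.
      + apply logT_deriv; auto.
    - intros t Ht.
      assert (E : / (1 - t) * (0 - 1) - - sumR (r - 1) (fun i => t ^ i) = - (t ^ (r - 1) / (1 - t))).
      { apply Rmult_eq_reg_l with (1 - t). 2: lra.
        replace ((1 - t) * (/ (1 - t) * (0 - 1) - - sumR (r - 1) (fun i => t ^ i))) with
          (-1 + (1 - t) * sumR (r - 1) (fun i => t ^ i)) by (field; lra).
        rewrite geom_sum. field. lra. }
      rewrite E, Rabs_Ropp. unfold Rdiv. rewrite Rabs_mult.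
      rewrite Rabs_right by (apply Rle_ge, pow_le; lra).
      rewrite Rabs_right by (apply Rle_ge, Rlt_le, Rinv_0_lt_compat; lra).
      assert (/ (1 - t) <= 2) by (replace 2 with (/ / 2) by field; apply Rinv_le_contravar; lra).
      assert (t ^ (r - 1) <= u ^ (r - 1)) by (apply pow_incr; lra).
      assert (0 <= t ^ (r - 1)) by (apply pow_le; lra).
      nra. }
  rewrite g0, Rminus_0_r, Rminus_0_r in Hb. unfold g in Hb.
  replace (2 * u ^ r) with (2 * u ^ (r - 1) * u). auto.
  replace r with (S (r - 1)) at 2 by lia. simpl. ring.
Qed.

Lemma prodR_shift n f : prodR (S n) f = f 0%nat * prodR n (fun i => f (S i)).
Proof.
  induction n. simpl. ring.
  change (prodR (S (S n)) f) with (prodR (S n) f * f (S n)). rewrite IHn. simpl. ring.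
Qed.

Lemma gbinom_succ p i : INR (S i) * gbinom p (S i) = p * gbinom (p - 1) i.
Proof.
  unfold gbinom. rewrite prodR_shift. rewrite fact_simpl, mult_INR.
  assert (0 < INR (fact i)) by (apply lt_0_INR, lt_O_fact).
  assert (0 < INR (S i)) by (apply lt_0_INR; lia).
  replace (prodR i (fun i0 => p - INR (S i0))) with (prodR i (fun i0 => p - 1 - INR i0)).
  - simpl INR at 2. field. lra.
  - clear. induction i. reflexivity. cbn [prodR]. rewrite IHi. f_equal. rewrite S_INR. ring.
Qed.

Definition binT (p : R) (r : nat) (u : R) : R := sumR r (fun k => gbinom p k * (- u) ^ k).

Lemma binT_deriv p r u : derivable_pt_lim (binT p (S r)) u (- p * binT (p - 1) r u).
Proof.
  unfold binT.
  apply (deriv_ext (fun t => sumR (S r) (fun m => (fun m t => t ^ m * (gbinom p m * (-1) ^ m)) m t))).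
  intros; apply sumR_ext; intros. replace (- t) with ((-1) * t) by ring. rewrite Rpow_mult_distr. ring.
  replace (- p * sumR r (fun k => gbinom (p - 1) k * (- u) ^ k)) with
    (sumR (S r) (fun m => INR m * u ^ Nat.pred m * (gbinom p m * (-1) ^ m))).
  - apply deriv_sumR. intros m _.
    apply (deriv_ext ((fun t => t ^ m) * fct_cte (gbinom p m * (-1) ^ m))%F). intros; reflexivity.
    replace (INR m * u ^ Nat.pred m * (gbinom p m * (-1) ^ m)) with
      (INR m * u ^ Nat.pred m * fct_cte (gbinom p m * (-1) ^ m) u + u ^ m * 0) by (unfold fct_cte; ring).
    apply derivable_pt_lim_mult. apply derivable_pt_lim_pow. apply derivable_pt_lim_const.
  - rewrite sumR_shift. simpl INR at 1. rewrite !Rmult_0_l, Rplus_0_l.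
    rewrite <- sumR_scal. apply sumR_ext. intros i _. simpl Nat.pred.
    replace (INR (S i) * u ^ i * (gbinom p (S i) * (-1) ^ S i)) with
      ((INR (S i) * gbinom p (S i)) * (u ^ i * (-1) ^ S i)) by ring.
    rewrite gbinom_succ. replace (- u) with ((-1) * u) by ring. rewrite Rpow_mult_distr. simpl. ring.
Qed.

Lemma Rpower_1m_deriv p t : t < 1 ->
  derivable_pt_lim (fun t => Rpower (1 - t) p) t (- p * Rpower (1 - t) (p - 1)).
Proof.
  intros Ht.
  apply (deriv_ext (comp (fun x => Rpower x p) (fun t => 1 - t))). intros; reflexivity.
  replace (- p * Rpower (1 - t) (p - 1)) with (p * Rpower (1 - t) (p - 1) * (0 - 1)) by ring.
  apply derivable_pt_lim_comp.
  - apply (deriv_ext (fct_cte 1 - id)%F). intros; reflexivity.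
    apply derivable_pt_lim_minus. apply derivable_pt_lim_const. apply derivable_pt_lim_id.
  - apply derivable_pt_lim_power. lra.
Qed.

Lemma Rpower_1m_bound p u : 0 <= u <= / 2 -> Rabs (Rpower (1 - u) p) <= exp (Rabs p).
Proof.
  intros Hu. unfold Rpower. rewrite Rabs_right by (left; apply exp_pos).
  apply exp_le_mono.
  assert (ln (1 - u) <= 0) by (pose proof (ln_le_sub1 (1 - u)); lra).
  assert (-1 <= ln (1 - u)).
  { assert (ln (/ 2) <= ln (1 - u)) by (apply ln_le_mono; lra).
    rewrite ln_Rinv in H0 by lra. pose proof ln_lt_2.
    assert (ln 2 <= 1). { pose proof (ln_le_sub1 2). pose proof (exp_ineq1_le 1).
      assert (ln 2 <= ln (exp 1)) by (apply ln_le_mono; lra). rewrite ln_exp in H4. lra. }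
    lra. }
  apply Rle_trans with (Rabs (p * ln (1 - u))). apply Rle_abs.
  rewrite Rabs_mult. rewrite <- (Rmult_1_r (Rabs p)) at 2. apply Rmult_le_compat_l. apply Rabs_pos.
  rewrite Rabs_left1 by lra. lra.
Qed.

Lemma binom_rem r : forall p, exists C, forall u, 0 <= u <= / 2 ->
  Rabs (Rpower (1 - u) p - binT p r u) <= C * u ^ r.
Proof.
  induction r; intros p.
  - exists (exp (Rabs p)). intros u Hu. unfold binT. simpl. rewrite Rminus_0_r, Rmult_1_r.
    apply Rpower_1m_bound; auto.
  - destruct (IHr (p - 1)) as [C HC]. exists (Rabs p * Rabs C). intros u Hu.
    set (g := fun t => Rpower (1 - t) p - binT p (S r) t).
    assert (g0 : g 0 = 0).
    { unfold g, binT. rewrite Rminus_0_r. unfold Rpower at 1. rewrite ln_1, Rmult_0_r, exp_0. rewrite sumR_shift, sumR_zero.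
      unfold gbinom. simpl. field. intros. rewrite Ropp_0, pow_i by lia. ring. }
    pose proof (MVT_bound g (fun t => - p * Rpower (1 - t) (p - 1) - - p * binT (p - 1) r t) 0 u
      (Rabs p * Rabs C * u ^ r) ltac:(lra)) as H.
    assert (Hb : Rabs (g u - g 0) <= Rabs p * Rabs C * u ^ r * (u - 0)).
    { apply H.
      - intros t Ht. unfold g. apply (derivable_pt_lim_minus (fun t => Rpower (1 - t) p) (binT p (S r))).
        apply Rpower_1m_deriv. lra. apply binT_deriv.
      - intros t Ht.
        replace (- p * Rpower (1 - t) (p - 1) - - p * binT (p - 1) r t) with
          (- p * (Rpower (1 - t) (p - 1) - binT (p - 1) r t)) by ring.
        rewrite Rabs_mult, Rabs_Ropp, Rmult_assoc. apply Rmult_le_compat_l. apply Rabs_pos.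
        eapply Rle_trans. apply HC. lra.
        apply Rle_trans with (Rabs C * t ^ r). apply Rmult_le_compat_r. apply pow_le; lra. apply Rle_abs.
        apply Rmult_le_compat_l. apply Rabs_pos. apply pow_incr. lra. }
    rewrite g0, !Rminus_0_r in Hb. unfold g in Hb. simpl. replace (Rabs p * Rabs C * (u * u ^ r)) with (Rabs p * Rabs C * u ^ r * u) by ring.
    auto.
Qed.

Lemma E_exp y Sf : Sf 0%nat = 0 -> (exists N, forall n, (N <= n)%nat -> y n <= 0) -> EXP y Sf ->
  EXP (fun n => exp (y n)) (fps_exp Sf).
Proof.
  intros H0 [N0 HN0] H r.
  destruct (H 1%nat) as [C1 [N1 H1]].
  destruct (eventually_small (Rabs C1)) as [N2 H2].
  assert (Hy : EXPr (fun n => expT r (y n)) (fun q => sumR r (fun m => fps_scale (/ INR (fact m)) (fps_pow Sf m) q)) r).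
  { unfold expT. apply (E_ext_fun (fun n => sumR r (fun m => / INR (fact m) * y n ^ m))) with (N0 := 0%nat).
    - intros n _. apply sumR_ext. intros. unfold Rdiv. ring.
    - apply (E_sum r (fun m n => / INR (fact m) * y n ^ m)). intros m _. apply E_scale. apply E_pow. apply H. }
  assert (He : EXPr (fun n => exp (y n) - expT r (y n)) (fun _ => 0) r).
  { apply E_zero. exists (Rabs C1 ^ r), (Nat.max (Nat.max N0 N1) (Nat.max N2 1)). intros n Hn.
    pose proof (zn_pos n ltac:(lia)).
    specialize (H1 n ltac:(lia)). specialize (H2 n ltac:(lia)). specialize (HN0 n ltac:(lia)).
    unfold evz in H1. simpl in H1. rewrite H0 in H1.
    assert (Hyb : - y n <= Rabs C1 * / INR n).
    { replace (y n - (0 + 0 * 1)) with (y n) in H1 by ring. rewrite Rabs_left1 in H1 by lra.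
      eapply Rle_trans. apply H1. rewrite Rmult_1_r. apply Rmult_le_compat_r. lra. apply Rle_abs. }
    eapply Rle_trans. apply exp_rem. lra. rewrite <- Rpow_mult_distr. apply pow_incr. lra. }
  eapply E_ext_fun with (N0 := 0%nat). 2: eapply E_ext_fps. 3: apply (E_add _ _ _ _ _ Hy He).
  - intros. simpl. ring.
  - intros q Hq. unfold fps_add, fps_exp. rewrite Rplus_0_r.
    rewrite (sumR_tail (S q) r). 2: lia.
    + apply sumR_ext. intros. unfold fps_scale, Rdiv. ring.
    + intros i Hi. unfold fps_scale. rewrite (fps_pow_val Sf H0 i q) by lia. ring.
Qed.

Lemma u_small (j n : nat) : (1 <= n)%nat -> (2 * j <= n)%nat -> 0 <= INR j * / INR n <= / 2.
Proof.
  intros H1 H2. assert (0 < INR n) by (apply lt_0_INR; lia).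
  split. apply Rmult_le_pos. apply pos_INR. left; apply Rinv_0_lt_compat; lra.
  apply Rmult_le_reg_r with (INR n); auto. rewrite Rmult_assoc, Rinv_l by lra.
  assert (2 * INR j <= INR n). { replace (2 * INR j) with (INR (2 * j)) by (rewrite mult_INR; simpl; ring). apply le_INR. lia. }
  lra.
Qed.

Lemma E_log (j : nat) : EXP (fun n => ln (1 - INR j * / INR n)) (fps_log1m (INR j)).
Proof.
  assert (Hr : forall r, (1 <= r)%nat -> EXPr (fun n => ln (1 - INR j * / INR n)) (fps_log1m (INR j)) r).
  { intros r Hr. exists (2 * INR j ^ r), (Nat.max (2 * j) 1). intros n Hn.
    pose proof (u_small j n ltac:(lia) ltac:(lia)).
    pose proof (log_rem r (INR j * / INR n) Hr H).
    replace (evz r (fps_log1m (INR j)) (/ INR n)) with (logT r (INR j * / INR n)).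
    - rewrite Rmult_assoc, <- Rpow_mult_distr. auto.
    - unfold logT, evz. apply sumR_ext. intros k _. destruct k. unfold fps_log1m. ring.
      unfold fps_log1m. rewrite pow1, Rpow_mult_distr.
      assert (0 < INR (S k)) by (apply lt_0_INR; lia). field. lra. }
  intros r. destruct r. apply (E_lower _ _ 1). lia. apply Hr; lia. apply Hr; lia.
Qed.

Lemma E_binom (j : nat) p : EXP (fun n => Rpower (1 - INR j * / INR n) p) (fps_binom (- INR j) p).
Proof.
  intros r. destruct (binom_rem r p) as [C HC]. exists (C * INR j ^ r), (Nat.max (2 * j) 1). intros n Hn.
  pose proof (u_small j n ltac:(lia) ltac:(lia)).
  specialize (HC _ H).
  replace (evz r (fps_binom (- INR j) p) (/ INR n)) with (binT p r (INR j * / INR n)).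
  - rewrite Rmult_assoc, <- Rpow_mult_distr. auto.
  - unfold binT, evz, fps_binom. apply sumR_ext. intros k _.
    replace (- (INR j * / INR n)) with (- INR j * / INR n) by ring. rewrite Rpow_mult_distr. ring.
Qed.

Lemma pow_exp x k : 0 < x -> x ^ k = exp (INR k * ln x).
Proof. intros. rewrite <- Rpower_pow by auto. reflexivity. Qed.

Lemma scale_seq_exp alpha beta gamma m : 0 < beta -> (1 <= m)%nat ->
  scale_seq alpha beta gamma m =
  exp (INR (alpha * m) * ln (INR m) + INR m * ln beta + gamma * ln (INR m)).
Proof.
  intros Hb Hm. assert (0 < INR m) by (apply lt_0_INR; lia).
  unfold scale_seq. rewrite !pow_exp by auto. unfold Rpower. rewrite <- !exp_plus. reflexivity.
Qed.

Lemma scale_seq_pos alpha beta gamma m : 0 < beta -> (1 <= m)%nat -> 0 < scale_seq alpha beta gamma m.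
Proof. intros. rewrite scale_seq_exp by auto. apply exp_pos. Qed.

Lemma ratio_id alpha beta gamma (j n : nat) : 0 < beta -> (j < n)%nat ->
  scale_seq alpha beta gamma (n - j) / scale_seq alpha beta gamma n =
  exp (- INR alpha * INR j) * / beta ^ j *
  ((/ INR n) ^ (alpha * j) *
   (Rpower (1 - INR j * / INR n) (gamma - INR alpha * INR j) *
    exp (INR alpha * (INR n * (ln (1 - INR j * / INR n) + INR j * / INR n))))).
Proof.
  intros Hb Hjn.
  assert (Hn : 0 < INR n) by (apply lt_0_INR; lia).
  assert (Hu : 0 < 1 - INR j * / INR n).
  { assert (INR j < INR n) by (apply lt_INR; lia).
    apply Rmult_lt_reg_r with (INR n); auto. rewrite Rmult_minus_distr_r, Rmult_assoc, Rinv_l by lra. lra. }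
  assert (Hm : INR (n - j) = INR n * (1 - INR j * / INR n)).
  { rewrite minus_INR by lia. field. lra. }
  assert (Hlm : ln (INR (n - j)) = ln (INR n) + ln (1 - INR j * / INR n)).
  { rewrite Hm. apply ln_mult; auto. }
  rewrite !scale_seq_exp by (auto; lia).
  rewrite pow_inv, !pow_exp by (auto; apply Rinv_0_lt_compat; auto).
  unfold Rpower. unfold Rdiv. rewrite <- !exp_Ropp, <- !exp_plus. f_equal.
  rewrite Hlm. rewrite !mult_INR, !minus_INR by lia.
  set (L := ln (INR n)). set (Lu := ln (1 - INR j * / INR n)).
  field. lra.
Qed.

Lemma E_term (a : nat -> R) alpha beta gamma At (j : nat) : 0 < beta ->
  EXP (fun m => a m / scale_seq alpha beta gamma m) At ->
  EXP (fun n => a (n - j)%nat / scale_seq alpha beta gamma n) (At_j alpha beta gamma At j).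
Proof.
  intros Hb HA.
  set (x := fun m => a m / scale_seq alpha beta gamma m) in *.
  pose proof (E_reparam x At j HA) as HX.
  assert (HL : EXP (fun n => ln (1 - INR j * / INR n) + INR j * / INR n)
                   (fps_add (fps_log1m (INR j)) (fps_lin (INR j)))).
  { intros r. apply E_add. apply E_log. apply E_lin. }
  assert (H0 : fps_add (fps_log1m (INR j)) (fps_lin (INR j)) 0%nat = 0).
  { unfold fps_add, fps_log1m, fps_lin. ring. }
  pose proof (E_divz _ _ H0 HL) as HD.
  assert (HS : EXP (fun n => INR alpha * (INR n * (ln (1 - INR j * / INR n) + INR j * / INR n)))
     (fps_scale (INR alpha) (fps_divz (fps_add (fps_log1m (INR j)) (fps_lin (INR j)))))).
  { intros r. apply E_scale. apply HD. }
  assert (HE : EXP (fun n => exp (INR alpha * (INR n * (ln (1 - INR j * / INR n) + INR j * / INR n))))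
     (fps_exp (fps_scale (INR alpha) (fps_divz (fps_add (fps_log1m (INR j)) (fps_lin (INR j))))))).
  { apply E_exp; auto.
    - unfold fps_scale, fps_divz, fps_add, fps_log1m, fps_lin. simpl. field.
    - exists (Nat.max (2 * j) 1). intros n Hn.
      pose proof (u_small j n ltac:(lia) ltac:(lia)).
      pose proof (ln_le_sub1 (1 - INR j * / INR n) ltac:(lra)).
      assert (0 <= INR n) by apply pos_INR. assert (0 <= INR alpha) by apply pos_INR.
      assert (ln (1 - INR j * / INR n) + INR j * / INR n <= 0) by lra.
      assert (0 <= INR n * - (ln (1 - INR j * / INR n) + INR j * / INR n)) by (apply Rmult_le_pos; lra).
      assert (0 <= INR alpha * (INR n * - (ln (1 - INR j * / INR n) + INR j * / INR n))) by (apply Rmult_le_pos; lra).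
      nra. }
  pose proof (E_binom j (gamma - INR alpha * INR j)) as HB.
  assert (HM : EXP (fun n => Rpower (1 - INR j * / INR n) (gamma - INR alpha * INR j) *
      (exp (INR alpha * (INR n * (ln (1 - INR j * / INR n) + INR j * / INR n))) * x (n - j)%nat))
     (fps_mul (fps_binom (- INR j) (gamma - INR alpha * INR j))
        (fps_mul (fps_exp (fps_scale (INR alpha) (fps_divz (fps_add (fps_log1m (INR j)) (fps_lin (INR j))))))
                 (fps_comp At (fps_shift 1 (fps_geom (INR j))))))).
  { intros r. apply E_mul. apply HB. apply E_mul. apply HE. apply HX. }
  pose proof (E_shift _ _ (alpha * j) HM) as HSh.
  unfold At_j. cbv zeta. intros r.
  eapply E_ext_fun. 2: apply E_scale; apply HSh.
  instantiate (1 := S j). intros n Hn. simpl.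
  assert (0 < scale_seq alpha beta gamma (n - j)) by (apply scale_seq_pos; auto; lia).
  assert (0 < scale_seq alpha beta gamma n) by (apply scale_seq_pos; auto; lia).
  replace (a (n - j)%nat / scale_seq alpha beta gamma n) with
    (scale_seq alpha beta gamma (n - j) / scale_seq alpha beta gamma n * x (n - j)%nat).
  2:{ unfold x. field. split; lra. }
  rewrite ratio_id by (auto; lia). ring.
Qed.

Lemma bern x k : 0 <= x -> (x + 1) ^ k * (x + 1 - INR k) <= x ^ k * (x + 1).
Proof.
  intros Hx. induction k.
  - simpl. lra.
  - rewrite S_INR. simpl.
    assert (0 <= (x + 1) ^ k) by (apply pow_le; lra).
    assert (x * ((x + 1) ^ k * (x + 1 - INR k)) <= x * (x ^ k * (x + 1))) by (apply Rmult_le_compat_l; lra).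
    assert (0 <= INR k) by apply pos_INR.
    nra.
Qed.

Lemma xx_logconvex (m : nat) : (1 <= m)%nat ->
  (INR (S m) ^ (S m)) ^ 2 <= INR m ^ m * INR (S (S m)) ^ (S (S m)).
Proof.
  intros Hm. set (y := INR m). assert (Hy : 1 <= y) by (apply (le_INR 1); lia).
  assert (E1 : INR (S m) = y + 1) by (unfold y; rewrite S_INR; ring).
  assert (E2 : INR (S (S m)) = y + 2) by (unfold y; rewrite !S_INR; ring).
  rewrite E1, E2. set (x := y * (y + 2)).
  assert (Hx : 0 <= x) by (unfold x; nra).
  pose proof (bern x m Hx) as B. fold y in B.
  assert (Hx1 : x + 1 = (y + 1) ^ 2) by (unfold x; ring).
  rewrite <- pow_mult. replace (S m * 2)%nat with (2 * S m)%nat by lia. rewrite pow_mult.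
  rewrite <- Hx1.
  replace ((y + 2) ^ S (S m)) with ((y + 2) ^ m * (y + 2) ^ 2) by (rewrite <- pow_add; f_equal; lia).
  rewrite <- Rmult_assoc, <- Rpow_mult_distr. fold x.
  assert (Hp : (x + 1) ^ 2 <= (x + 1 - y) * (y + 2) ^ 2) by (unfold x; nra).
  assert (0 <= (x + 1) ^ m) by (apply pow_le; lra).
  assert (0 < x + 1) by lra.
  apply Rmult_le_reg_r with (x + 1); auto.
  simpl pow at 1.
  apply Rle_trans with ((x + 1) ^ m * ((x + 1 - y) * (y + 2) ^ 2)).
  - replace ((x + 1) * (x + 1) ^ m * (x + 1)) with ((x + 1) ^ m * ((x + 1) * ((x + 1) * 1))) by ring.
    apply Rmult_le_compat_l; auto.
  - replace ((x + 1) ^ m * ((x + 1 - y) * (y + 2) ^ 2)) with (((x + 1) ^ m * (x + 1 - y)) * (y + 2) ^ 2) by ring.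
    replace (x ^ m * (y + 2) ^ 2 * (x + 1)) with ((x ^ m * (x + 1)) * (y + 2) ^ 2) by ring.
    apply Rmult_le_compat_r. apply pow_le; lra. auto.
Qed.

Definition Dm (alpha c i : nat) : R := INR (i + c) ^ (alpha * (i + c)).

Section DM.
Variables (alpha c : nat).
Hypothesis (Ha : (1 <= alpha)%nat) (Hc : (1 <= c)%nat).

Lemma D_ge1 i : 1 <= Dm alpha c i.
Proof. unfold Dm. apply pow_R1_Rle. apply (le_INR 1). lia. Qed.

Lemma D_pos i : 0 < Dm alpha c i.
Proof. pose proof (D_ge1 i). lra. Qed.

Lemma D_sq i : Dm alpha c (S i) ^ 2 <= Dm alpha c i * Dm alpha c (S (S i)).
Proof.
  unfold Dm. rewrite !(Nat.mul_comm alpha), !pow_mult.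
  rewrite <- pow_mult, Nat.mul_comm, pow_mult.
  rewrite <- Rpow_mult_distr. apply pow_incr. split.
  - apply pow_le. apply pow_le. apply pos_INR.
  - pose proof (xx_logconvex (i + c) ltac:(lia)).
    replace (S i + c)%nat with (S (i + c)) by lia.
    replace (S (S i) + c)%nat with (S (S (i + c))) by lia. auto.
Qed.

Lemma D_step a b : (a <= b)%nat -> Dm alpha c (S a) * Dm alpha c b <= Dm alpha c a * Dm alpha c (S b).
Proof.
  intros Hab. induction b.
  - replace a with 0%nat by lia. lra.
  - destruct (Nat.eq_dec a (S b)). subst. lra.
    specialize (IHb ltac:(lia)).
    pose proof (D_sq b). pose proof (D_pos a). pose proof (D_pos (S a)).
    pose proof (D_pos b). pose proof (D_pos (S b)). pose proof (D_pos (S (S b))).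
    simpl in H.
    apply Rmult_le_reg_r with (Dm alpha c b * Dm alpha c (S b)). nra.
    apply Rle_trans with (Dm alpha c a * Dm alpha c (S b) * (Dm alpha c (S b) * Dm alpha c (S b))).
    + replace (Dm alpha c (S a) * Dm alpha c (S b) * (Dm alpha c b * Dm alpha c (S b))) with
        ((Dm alpha c (S a) * Dm alpha c b) * (Dm alpha c (S b) * Dm alpha c (S b))) by ring.
      apply Rmult_le_compat_r. nra. auto.
    + replace (Dm alpha c a * Dm alpha c (S (S b)) * (Dm alpha c b * Dm alpha c (S b))) with
        (Dm alpha c a * Dm alpha c (S b) * (Dm alpha c b * Dm alpha c (S (S b)))) by ring.
      apply Rmult_le_compat_l. nra. lra.
Qed.

Lemma D_LC_aux p s t : (s + t <= p - s - t)%nat ->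
  Dm alpha c (s + t) * Dm alpha c (p - (s + t)) <= Dm alpha c s * Dm alpha c (p - s).
Proof.
  induction t; intros H.
  - rewrite Nat.add_0_r. lra.
  - specialize (IHt ltac:(lia)).
    pose proof (D_step (s + t) (p - (s + S t)) ltac:(lia)).
    replace (S (s + t)) with (s + S t)%nat in H0 by lia.
    replace (S (p - (s + S t))) with (p - (s + t))%nat in H0 by lia.
    lra.
Qed.

Lemma D_LC p s i : (s <= i)%nat -> (i <= p - s)%nat ->
  Dm alpha c i * Dm alpha c (p - i) <= Dm alpha c s * Dm alpha c (p - s).
Proof.
  intros H1 H2. destruct (le_lt_dec i (p - i)).
  - pose proof (D_LC_aux p s (i - s) ltac:(lia)). replace (s + (i - s))%nat with i in H by lia. auto.
  - pose proof (D_LC_aux p s (p - i - s) ltac:(lia)).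
    replace (s + (p - i - s))%nat with (p - i)%nat in H by lia.
    replace (p - (p - i))%nat with i in H by lia. lra.
Qed.

Lemma D_grow i : INR (S i + c) * Dm alpha c i <= Dm alpha c (S i).
Proof.
  unfold Dm. replace (alpha * (S i + c))%nat with (alpha + alpha * (i + c))%nat by lia.
  rewrite pow_add.
  assert (1 <= INR (S i + c)) by (apply (le_INR 1); lia).
  apply Rmult_le_compat.
  - lra.
  - apply pow_le. apply pos_INR.
  - rewrite <- (pow_1 (INR (S i + c))) at 1. apply Rle_pow; auto.
  - apply pow_incr. split. apply pos_INR. apply le_INR. lia.
Qed.

Lemma D_mono i : Dm alpha c i <= Dm alpha c (S i).
Proof.
  pose proof (D_grow i). pose proof (D_pos i).
  assert (1 <= INR (S i + c)) by (apply (le_INR 1); lia). nra.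
Qed.

End DM.

Definition trunc (m : nat) (F : fps) : fps := fun i => if Nat.leb i m then F i else 0.

Lemma comp_low (f V V' : fps) m : (forall i, (i <= m)%nat -> V i = V' i) ->
  forall q, (q <= m)%nat -> fps_comp f V q = fps_comp f V' q.
Proof.
  intros H q Hq. unfold fps_comp. apply sumR_ext. intros k _. f_equal.
  apply (fps_pow_low m); auto.
Qed.

Lemma comp_rec (M th : R) (V : fps) : V 0%nat = 0 -> forall q, (1 <= q)%nat ->
  fps_comp (fun k => M * th ^ k) V q = th * sumR (S q) (fun i => V i * fps_comp (fun k => M * th ^ k) V (q - i)%nat).
Proof.
  intros H0 q Hq. unfold fps_comp at 1. rewrite sumR_shift.
  replace (fps_pow V 0 q) with 0 by (simpl; unfold fps_one; destruct q; [lia|reflexivity]).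
  rewrite Rmult_0_r, Rplus_0_l.
  rewrite (sumR_ext q _ (fun k => sumR (S q) (fun i => th * (V i * (M * th ^ k * fps_pow V k (q - i)%nat))))).
  2:{ intros k Hk. simpl fps_pow. unfold fps_mul. cbv beta. rewrite <- sumR_scal.
      apply sumR_ext. intros. simpl pow. ring. }
  rewrite sumR_swap. rewrite <- sumR_scal. apply sumR_ext. intros i Hi.
  rewrite (sumR_ext q _ (fun k => (th * V i) * (M * th ^ k * fps_pow V k (q - i)%nat))) by (intros; ring).
  rewrite sumR_scal. rewrite Rmult_assoc.
  destruct i. { rewrite H0. ring. }
  f_equal. f_equal. unfold fps_comp. rewrite (sumR_tail (S (q - S i)) q). 2: lia.
  - reflexivity.
  - intros k Hk. rewrite (fps_pow_val V H0 k) by lia. ring.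
Qed.

Lemma comp_nonneg (f V : fps) : (forall k, 0 <= f k) -> (forall i, 0 <= V i) -> forall q, 0 <= fps_comp f V q.
Proof.
  intros Hf HV q. unfold fps_comp. apply sumR_nonneg. intros. apply Rmult_le_pos; auto.
  apply fps_pow_nonneg; auto.
Qed.

Lemma comp_zero (f V : fps) : fps_comp f V 0%nat = f 0%nat.
Proof. unfold fps_comp. simpl. unfold fps_one. ring. Qed.

Lemma sumR_const n A : sumR n (fun _ => A) = INR n * A.
Proof. induction n. simpl; ring. cbn [sumR]. rewrite IHn, S_INR. ring. Qed.

Lemma sumR_indic n k A : 0 <= A -> sumR n (fun i => if Nat.ltb i k then A else 0) <= INR k * A.
Proof.
  intros HA. induction n.
  - simpl. apply Rmult_le_pos; auto. apply pos_INR.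
  - cbn [sumR]. destruct (Nat.ltb n k) eqn:E.
    + apply Nat.ltb_lt in E.
      assert (sumR n (fun i => if Nat.ltb i k then A else 0) <= INR n * A).
      { rewrite <- sumR_const. apply sumR_le. intros. destruct (Nat.ltb i k); lra. }
      assert (INR n + 1 <= INR k) by (rewrite <- S_INR; apply le_INR; lia). nra.
    + lra.
Qed.

Lemma sumR_eqb n k A : (k < n)%nat -> sumR n (fun i => if Nat.eqb i k then A else 0) = A.
Proof.
  intros H. induction n. lia. cbn [sumR]. destruct (Nat.eq_dec k n).
  - subst. rewrite Nat.eqb_refl. rewrite sumR_zero. ring.
    intros i Hi. destruct (Nat.eqb i n) eqn:E. apply Nat.eqb_eq in E. lia. reflexivity.
  - rewrite IHn by lia. destruct (Nat.eqb n k) eqn:E. apply Nat.eqb_eq in E. lia. ring.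
Qed.

Section Bender.
Variables (alpha c : nat) (beta K M th : R) (W : fps).
Hypotheses (Ha : (1 <= alpha)%nat) (Hc : (1 <= c)%nat) (Hb : 0 < beta) (HK : 0 <= K)
  (HM : 0 <= M) (Hth : 0 <= th) (HW0 : W 0%nat = 0) (HWn : forall i, 0 <= W i)
  (HWb : forall i, W i <= K * beta ^ i * Dm alpha c i).

Let f := fun k : nat => M * th ^ k.
Let D := Dm alpha c.
Let t := fun q => fps_comp f W q.

Lemma f_nonneg k : 0 <= f k.
Proof. unfold f. apply Rmult_le_pos; auto. apply pow_le; auto. Qed.

Lemma t_nonneg q : 0 <= t q.
Proof. unfold t. apply comp_nonneg. apply f_nonneg. auto. Qed.

Lemma t_rec q : (1 <= q)%nat -> t q = th * sumR (S q) (fun i => W i * t (q - i)%nat).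
Proof. intros Hq. unfold t, f. apply comp_rec; auto. Qed.

Lemma t_bound : exists Ct, 0 <= Ct /\ forall q, t q <= Ct * beta ^ q * D q.
Proof.
  set (B := 2 * th * K * (2 * D 1%nat + D 2%nat)).
  destruct (nat_above B) as [N HN].
  set (q0 := Nat.max N 2).
  set (Ct := 2 * th * K * M + sumR q0 (fun q => t q / (beta ^ q * D q))).
  assert (HDp : forall i, 0 < D i) by (intros; apply D_pos; auto).
  assert (Hbq : forall i, 0 < beta ^ i) by (intros; apply pow_lt; auto).
  assert (Hs : 0 <= sumR q0 (fun q => t q / (beta ^ q * D q))).
  { apply sumR_nonneg. intros. unfold Rdiv. apply Rmult_le_pos. apply t_nonneg.
    left; apply Rinv_0_lt_compat. apply Rmult_lt_0_compat; auto. }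
  assert (HCt : 0 <= Ct).
  { unfold Ct. assert (0 <= th * K * M) by (apply Rmult_le_pos; [apply Rmult_le_pos|]; auto). lra. }
  exists Ct. split; auto.
  intro q. induction q as [q IH] using (well_founded_induction lt_wf).
  destruct (lt_dec q q0) as [Hq|Hq].
  - assert (E : t q = t q / (beta ^ q * D q) * (beta ^ q * D q)).
    { assert (0 < beta ^ q * D q) by (apply Rmult_lt_0_compat; auto). unfold Rdiv. rewrite Rmult_assoc, Rinv_l by lra. ring. }
    rewrite E. rewrite Rmult_assoc. apply Rmult_le_compat_r.
    { apply Rmult_le_pos; left; auto. }
    unfold Ct. assert (0 <= th * K * M) by (apply Rmult_le_pos; [apply Rmult_le_pos|]; auto).
    pose proof (sumR_pos_le_sum q0 (fun q => t q / (beta ^ q * D q)) q) as P.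
    simpl in P. assert (t q / (beta ^ q * D q) <= sumR q0 (fun q => t q / (beta ^ q * D q))).
    { apply P; auto. intros. unfold Rdiv. apply Rmult_le_pos. apply t_nonneg.
      left; apply Rinv_0_lt_compat. apply Rmult_lt_0_compat; auto. }
    lra.
  - assert (Hq2 : (2 <= q)%nat) by lia.
    rewrite t_rec by lia.
    rewrite sumR_shift. rewrite HW0, Rmult_0_l, Rplus_0_l.
    replace q with (S (q - 1)) at 1 by lia. rewrite sumR_S.
    replace (S (q - 1)) with q by lia. rewrite Nat.sub_diag.
    assert (Ht0 : t 0%nat = M) by (unfold t; rewrite comp_zero; unfold f; simpl; ring).
    rewrite Ht0.
    set (X := D 1%nat * D (q - 1)%nat). set (Y := D 2%nat * D (q - 2)%nat).
    assert (HX : 0 <= X) by (unfold X; apply Rmult_le_pos; left; auto).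
    assert (HY : 0 <= Y) by (unfold Y; apply Rmult_le_pos; left; auto).
    set (g := fun i : nat => (if Nat.eqb i 0 then X else 0) + (if Nat.eqb i (q - 2) then X else 0) + Y).
    assert (Hsum : sumR (q - 1) (fun i => W (S i) * t (q - S i)%nat) <= K * Ct * beta ^ q * sumR (q - 1) g).
    { rewrite <- sumR_scal. apply sumR_le. intros i Hi.
      apply Rle_trans with ((K * beta ^ S i * D (S i)) * (Ct * beta ^ (q - S i) * D (q - S i)%nat)).
      { apply Rmult_le_compat; [auto|apply t_nonneg|apply HWb|apply IH; lia]. }
      replace ((K * beta ^ S i * D (S i)) * (Ct * beta ^ (q - S i) * D (q - S i)%nat)) with
        (K * Ct * (beta ^ S i * beta ^ (q - S i)) * (D (S i) * D (q - S i)%nat)) by ring.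
      rewrite <- pow_add. replace (S i + (q - S i))%nat with q by lia.
      apply Rmult_le_compat_l. apply Rmult_le_pos. apply Rmult_le_pos; auto. left; auto.
      unfold g. destruct (Nat.eqb i 0) eqn:E0.
      - apply Nat.eqb_eq in E0. subst i. unfold X in *. replace (q - 1)%nat with (q - 1)%nat by lia.
        destruct (Nat.eqb 0 (q - 2)); lra.
      - apply Nat.eqb_neq in E0. destruct (Nat.eqb i (q - 2)) eqn:E2.
        + apply Nat.eqb_eq in E2. subst i. unfold X in *.
          replace (S (q - 2)) with (q - 1)%nat by lia. replace (q - (q - 1))%nat with 1%nat by lia. lra.
        + apply Nat.eqb_neq in E2. unfold Y in *.
          pose proof (D_LC alpha c Ha Hc q 2 (S i) ltac:(lia) ltac:(lia)). fold D in H. lra. }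
    assert (Hg : sumR (q - 1) g <= 2 * X + INR q * Y).
    { unfold g. rewrite !sumR_plus. rewrite !sumR_eqb by lia. rewrite sumR_const.
      assert (INR (q - 1) <= INR q) by (apply le_INR; lia). nra. }
    set (A := INR (q - 1 + c)).
    assert (HA1 : INR q <= A) by (unfold A; apply le_INR; lia).
    assert (HNq : INR N <= INR q) by (apply le_INR; lia).
    assert (HAB : B < A) by lra.
    assert (HG1 : INR (q + c) * D (q - 1)%nat <= D q).
    { pose proof (D_grow alpha c Ha Hc (q - 1)). fold D in H.
      replace (S (q - 1)) with q in H by lia.
      replace (S (q - 1) + c)%nat with (q + c)%nat in H by lia. auto. }
    assert (HG2 : A * D (q - 2)%nat <= D (q - 1)%nat).
    { pose proof (D_grow alpha c Ha Hc (q - 2)). fold D in H.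
      replace (S (q - 2)) with (q - 1)%nat in H by lia. unfold A.
      replace (S (q - 2) + c)%nat with (q - 1 + c)%nat in H by lia. auto. }
    assert (HA0 : 0 < A) by (assert (0 < INR q) by (apply lt_0_INR; lia); lra).
    assert (HAqc : A <= INR (q + c)) by (unfold A; apply le_INR; lia).
    assert (Hqc : INR q <= INR (q + c)) by (apply le_INR; lia).
    assert (HD1 : 0 < D 1%nat) by auto. assert (HD2 : 0 < D 2%nat) by auto.
    assert (HDq1 : 0 < D (q - 1)%nat) by auto. assert (HDq2 : 0 < D (q - 2)%nat) by auto.
    assert (K1 : 2 * X * A <= 2 * D 1%nat * D q).
    { unfold X. assert (D (q - 1)%nat * A <= D q) by nra. nra. }
    assert (K2 : INR q * Y * A <= D 2%nat * D q).
    { unfold Y.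
      assert (INR q * (A * D (q - 2)%nat) <= INR q * D (q - 1)%nat) by (apply Rmult_le_compat_l; [apply pos_INR| auto]).
      assert (INR q * D (q - 1)%nat <= D q) by nra. nra. }
    assert (Hkey : th * K * (2 * X + INR q * Y) <= D q / 2).
    { apply Rmult_le_reg_r with A; auto.
      assert (th * K * ((2 * X + INR q * Y) * A) <= th * K * ((2 * D 1%nat + D 2%nat) * D q)).
      { apply Rmult_le_compat_l. apply Rmult_le_pos; auto. lra. }
      assert (th * K * ((2 * D 1%nat + D 2%nat) * D q) = B / 2 * D q) by (unfold B; field).
      assert (B / 2 * D q <= A / 2 * D q) by (apply Rmult_le_compat_r; [left; apply HDp| lra]).
      replace (D q / 2 * A) with (A / 2 * D q) by (field).
      replace (th * K * (2 * X + INR q * Y) * A) with (th * K * ((2 * X + INR q * Y) * A)) by ring.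
      lra. }
    assert (Hsum2 : sumR (q - 1) (fun i => W (S i) * t (q - S i)%nat) <= K * Ct * beta ^ q * (2 * X + INR q * Y)).
    { eapply Rle_trans. apply Hsum. apply Rmult_le_compat_l; auto.
      apply Rmult_le_pos. apply Rmult_le_pos; auto. left; auto. }
    assert (HWq : W q * M <= K * beta ^ q * D q * M) by (apply Rmult_le_compat_r; auto).
    assert (HthKM : 2 * (th * K * M) <= Ct).
    { unfold Ct. lra. }
    pose proof (Hbq q). pose proof (HDp q).
    assert (T1 : th * (K * Ct * beta ^ q * (2 * X + INR q * Y)) <= Ct * beta ^ q * D q / 2).
    { replace (th * (K * Ct * beta ^ q * (2 * X + INR q * Y))) with ((th * K * (2 * X + INR q * Y)) * (Ct * beta ^ q)) by ring.
      replace (Ct * beta ^ q * D q / 2) with ((D q / 2) * (Ct * beta ^ q)) by field.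
      apply Rmult_le_compat_r. apply Rmult_le_pos; auto. left; auto. auto. }
    assert (T2 : th * (K * beta ^ q * D q * M) <= Ct * beta ^ q * D q / 2).
    { replace (th * (K * beta ^ q * D q * M)) with ((th * K * M) * (beta ^ q * D q)) by ring.
      replace (Ct * beta ^ q * D q / 2) with ((Ct / 2) * (beta ^ q * D q)) by field.
      apply Rmult_le_compat_r. apply Rmult_le_pos; left; auto. lra. }
    assert (th * (sumR (q - 1) (fun i => W (S i) * t (q - S i)%nat) + W q * M) <=
            th * (K * Ct * beta ^ q * (2 * X + INR q * Y) + K * beta ^ q * D q * M)).
    { apply Rmult_le_compat_l; auto. lra. }
    lra.
Qed.

Let U := fun m q => fps_comp f (trunc m W) q.

Lemma trunc_nonneg m i : 0 <= trunc m W i.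
Proof. unfold trunc. destruct (Nat.leb i m); auto. lra. Qed.

Lemma U_nonneg m q : 0 <= U m q.
Proof. unfold U. apply comp_nonneg. apply f_nonneg. apply trunc_nonneg. Qed.

Lemma U_rec m q : (1 <= q)%nat -> U m q = th * sumR (S q) (fun i => trunc m W i * U m (q - i)%nat).
Proof. intros Hq. unfold U, f. apply comp_rec; auto. Qed.

Lemma U_low m q : (q <= m)%nat -> U m q = t q.
Proof.
  intros Hq. unfold U, t. apply (comp_low _ _ _ m); auto.
  intros i Hi. unfold trunc. destruct (Nat.leb i m) eqn:E; auto. apply Nat.leb_gt in E. lia.
Qed.

Lemma D_mono_le i j : (i <= j)%nat -> D i <= D j.
Proof.
  intros H. induction j. replace i with 0%nat by lia. lra.
  destruct (Nat.eq_dec i (S j)). subst; lra.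
  pose proof (D_mono alpha c Ha Hc j). fold D in H0. specialize (IHj ltac:(lia)). lra.
Qed.

Lemma U_bound : forall s, exists C, 0 <= C /\ forall s', (1 <= s' <= s)%nat -> forall p, (2 * s' <= p)%nat ->
  U (p - s')%nat p <= C * INR (S p) * beta ^ p * D (p - s')%nat.
Proof.
  destruct t_bound as [Ct [HCt Ht]].
  assert (HDp : forall i, 0 < D i) by (intros; apply D_pos; auto).
  assert (Hbq : forall i, 0 < beta ^ i) by (intros; apply pow_lt; auto).
  induction s.
  - exists 0. split. lra. intros. lia.
  - destruct IHs as [C0 [HC0 IH]].
    set (s1 := S s).
    set (C1 := th * K * D s1 * (INR s1 * C0 + Ct)).
    assert (HC1 : 0 <= C1).
    { unfold C1. apply Rmult_le_pos. apply Rmult_le_pos. apply Rmult_le_pos; auto. left; auto.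
      assert (0 <= INR s1) by apply pos_INR. nra. }
    exists (C0 + C1). split. lra.
    intros s' Hs' p Hp.
    assert (HR : 0 <= INR (S p) * beta ^ p * D (p - s')%nat).
    { apply Rmult_le_pos. apply Rmult_le_pos. apply pos_INR. left; auto. left; auto. }
    destruct (Nat.eq_dec s' s1) as [E|E].
    2:{ eapply Rle_trans. apply IH. lia. auto.
        replace ((C0 + C1) * INR (S p) * beta ^ p * D (p - s')%nat) with
          (C0 * INR (S p) * beta ^ p * D (p - s')%nat + C1 * (INR (S p) * beta ^ p * D (p - s')%nat)) by ring.
        assert (0 <= C1 * (INR (S p) * beta ^ p * D (p - s')%nat)) by (apply Rmult_le_pos; auto).
        lra. }
    subst s'.
    set (Q := D s1 * beta ^ p * D (p - s1)%nat).
    assert (HQ : 0 <= Q) by (unfold Q; apply Rmult_le_pos; [apply Rmult_le_pos|]; left; auto).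
    set (g := fun i : nat => (if Nat.ltb i s1 then K * C0 * INR (S p) * Q else 0) + K * Ct * Q).
    assert (Hterm : forall i, (i < S p)%nat -> trunc (p - s1) W i * U (p - s1)%nat (p - i)%nat <= g i).
    { intros i Hi. unfold g.
      assert (HgA : 0 <= K * C0 * INR (S p) * Q).
      { apply Rmult_le_pos; auto. apply Rmult_le_pos. apply Rmult_le_pos; auto. apply pos_INR. }
      assert (HgB : 0 <= K * Ct * Q) by (apply Rmult_le_pos; auto; apply Rmult_le_pos; auto).
      unfold trunc at 1. destruct (Nat.leb i (p - s1)) eqn:Ei.
      2:{ rewrite Rmult_0_l. destruct (Nat.ltb i s1); lra. }
      apply Nat.leb_le in Ei.
      destruct i as [|i].
      { rewrite HW0, Rmult_0_l. destruct (Nat.ltb 0 s1); lra. }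
      destruct (Nat.ltb (S i) s1) eqn:El.
      - apply Nat.ltb_lt in El.
        replace (p - s1)%nat with ((p - S i) - (s1 - S i))%nat by lia.
        pose proof (IH (s1 - S i)%nat ltac:(unfold s1 in *; lia) (p - S i)%nat ltac:(unfold s1 in *; lia)) as HU.
        replace (p - S i - (s1 - S i))%nat with (p - s1)%nat in HU by lia.
        replace (p - S i - (s1 - S i))%nat with (p - s1)%nat by lia.
        assert (HWi : W (S i) <= K * beta ^ S i * D s1).
        { eapply Rle_trans. apply HWb. apply Rmult_le_compat_l. apply Rmult_le_pos; auto. left; auto.
          apply D_mono_le. lia. }
        assert (HS : INR (S (p - S i)) <= INR (S p)) by (apply le_INR; lia).
        assert (HU2 : U (p - s1)%nat (p - S i)%nat <= C0 * INR (S p) * beta ^ (p - S i) * D (p - s1)%nat).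
        { eapply Rle_trans. apply HU. apply Rmult_le_compat_r. left; auto. apply Rmult_le_compat_r. left; auto.
          apply Rmult_le_compat_l; auto. }
        apply Rle_trans with ((K * beta ^ S i * D s1) * (C0 * INR (S p) * beta ^ (p - S i) * D (p - s1)%nat)).
        + apply Rmult_le_compat; auto. apply U_nonneg.
        + replace ((K * beta ^ S i * D s1) * (C0 * INR (S p) * beta ^ (p - S i) * D (p - s1)%nat)) with
            (K * C0 * INR (S p) * (D s1 * (beta ^ S i * beta ^ (p - S i)) * D (p - s1)%nat)) by ring.
          rewrite <- pow_add. replace (S i + (p - S i))%nat with p by lia. unfold Q in *. lra.
      - apply Nat.ltb_ge in El.
        rewrite U_low by lia.
        apply Rle_trans with ((K * beta ^ S i * D (S i)) * (Ct * beta ^ (p - S i) * D (p - S i)%nat)).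
        + apply Rmult_le_compat; auto. apply t_nonneg.
        + replace ((K * beta ^ S i * D (S i)) * (Ct * beta ^ (p - S i) * D (p - S i)%nat)) with
            (K * Ct * (beta ^ S i * beta ^ (p - S i)) * (D (S i) * D (p - S i)%nat)) by ring.
          rewrite <- pow_add. replace (S i + (p - S i))%nat with p by lia.
          pose proof (D_LC alpha c Ha Hc p s1 (S i) El Ei). fold D in H.
          assert (0 <= K * Ct * beta ^ p) by (apply Rmult_le_pos; [apply Rmult_le_pos|]; auto; left; auto).
          assert (K * Ct * beta ^ p * (D (S i) * D (p - S i)%nat) <= K * Ct * beta ^ p * (D s1 * D (p - s1)%nat)).
          { apply Rmult_le_compat_l; auto. }
          unfold Q. replace (K * Ct * (D s1 * beta ^ p * D (p - s1)%nat)) with (K * Ct * beta ^ p * (D s1 * D (p - s1)%nat)) by ring.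
          lra. }
    rewrite U_rec by lia.
    assert (Hs : sumR (S p) (fun i => trunc (p - s1) W i * U (p - s1)%nat (p - i)%nat) <= sumR (S p) g).
    { apply sumR_le. auto. }
    assert (Hg : sumR (S p) g <= INR s1 * (K * C0 * INR (S p) * Q) + INR (S p) * (K * Ct * Q)).
    { unfold g. rewrite sumR_plus. rewrite sumR_const.
      pose proof (sumR_indic (S p) s1 (K * C0 * INR (S p) * Q)).
      assert (0 <= K * C0 * INR (S p) * Q).
      { apply Rmult_le_pos; auto. apply Rmult_le_pos. apply Rmult_le_pos; auto. apply pos_INR. }
      specialize (H H0). lra. }
    assert (Hfin : th * (INR s1 * (K * C0 * INR (S p) * Q) + INR (S p) * (K * Ct * Q)) = C1 * INR (S p) * beta ^ p * D (p - s1)%nat).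
    { unfold C1, Q. ring. }
    assert (th * sumR (S p) (fun i => trunc (p - s1) W i * U (p - s1)%nat (p - i)%nat) <=
            th * (INR s1 * (K * C0 * INR (S p) * Q) + INR (S p) * (K * Ct * Q))).
    { apply Rmult_le_compat_l; auto. lra. }
    assert (0 <= C0 * INR (S p) * beta ^ p * D (p - s1)%nat).
    { replace (C0 * INR (S p) * beta ^ p * D (p - s1)%nat) with (C0 * (INR (S p) * beta ^ p * D (p - s1)%nat)) by ring.
      apply Rmult_le_pos; auto. }
    lra.
Qed.

End Bender.

Lemma fps_pow_one F : fps_pow F 1 = F.
Proof. simpl. rewrite fps_mul_comm. apply fps_mul_one_l. Qed.

Lemma decomp (h a : fps) (n R : nat) : a 0%nat = 0 -> (1 <= R)%nat -> (2 * R <= n)%nat ->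
  fps_comp h a n = fps_comp h (trunc (n - R) a) n +
    sumR R (fun j => fps_comp (fps_deriv h) a j * a (n - j)%nat).
Proof.
  intros Ha0 HR Hn.
  set (m := (n - R)%nat).
  set (T := trunc m a).
  set (L := fun i => if Nat.leb i m then 0 else a i).
  assert (HaTL : a = fps_add T L).
  { apply functional_extensionality. intro i. unfold fps_add, T, L, trunc.
    destruct (Nat.leb i m); ring. }
  assert (HL0 : forall i, (i < S m)%nat -> L i = 0).
  { intros i Hi. unfold L. destruct (Nat.leb i m) eqn:E. reflexivity. apply Nat.leb_gt in E. lia. }
  assert (Claim : forall k q, (q <= n)%nat ->
    fps_pow a (S k) q = fps_pow T (S k) q + INR (S k) * fps_mul L (fps_pow T k) q).
  { induction k; intros q Hq.
    - rewrite !fps_pow_one. simpl fps_pow. rewrite fps_mul_comm, fps_mul_one_l.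
      unfold T, L, trunc. destruct (Nat.leb q m); simpl; ring.
    - change (fps_pow a (S (S k))) with (fps_mul a (fps_pow a (S k))).
      rewrite (fps_mul_low n a (fps_pow a (S k)) a
        (fps_add (fps_pow T (S k)) (fps_scale (INR (S k)) (fps_mul L (fps_pow T k))))); auto.
      rewrite HaTL.
      rewrite fps_mul_add_l, !fps_mul_add_r, !fps_mul_scale_r.
      assert (E1 : fps_mul T (fps_mul L (fps_pow T k)) = fps_mul L (fps_pow T (S k))).
      { simpl fps_pow. rewrite fps_mul_assoc, (fps_mul_comm T L), <- fps_mul_assoc. reflexivity. }
      rewrite E1.
      assert (E2 : fps_mul L (fps_mul L (fps_pow T k)) q = 0).
      { apply (fps_mul_val (S m) (S m)); auto.
        - intros i Hi. apply (fps_mul_val (S m) 0); auto. intros; lia. lia.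
        - unfold m. lia. }
      unfold fps_add, fps_scale. rewrite E2.
      change (fps_pow T (S (S k))) with (fps_mul T (fps_pow T (S k))).
      rewrite !S_INR. ring. }
  unfold fps_comp at 1 2. rewrite !sumR_shift.
  assert (Hp0 : forall F, fps_pow F 0 n = 0) by (intros; simpl; unfold fps_one; destruct n; [lia|reflexivity]).
  rewrite !Hp0.
  rewrite (sumR_ext n _ (fun k => h (S k) * fps_pow T (S k) n + h (S k) * INR (S k) * fps_mul L (fps_pow T k) n)).
  2:{ intros k Hk. rewrite Claim by lia. ring. }
  rewrite sumR_plus.
  assert (E3 : forall k, fps_mul L (fps_pow T k) n = sumR R (fun j => a (n - j)%nat * fps_pow a k j)).
  { intro k. unfold fps_mul. rewrite sumR_rev.
    rewrite (sumR_tail R (S n)); [| lia |].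
    - apply sumR_ext. intros j Hj. replace (S n - 1 - j)%nat with (n - j)%nat by lia.
      replace (n - (n - j))%nat with j by lia.
      unfold L. destruct (Nat.leb (n - j) m) eqn:E. apply Nat.leb_le in E. unfold m in E. lia.
      f_equal. unfold T. apply (fps_pow_low m). intros i Hi. unfold trunc.
      destruct (Nat.leb i m) eqn:E'. reflexivity. apply Nat.leb_gt in E'. lia. unfold m. lia.
    - intros j Hj. replace (S n - 1 - j)%nat with (n - j)%nat by lia.
      rewrite HL0. ring. unfold m. lia. }
  rewrite (sumR_ext n (fun k => h (S k) * INR (S k) * fps_mul L (fps_pow T k) n) (fun k => sumR R (fun j => h (S k) * INR (S k) * (a (n - j)%nat * fps_pow a k j)))).
  2:{ intros k Hk. rewrite E3. rewrite sumR_scal. reflexivity. }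
  rewrite sumR_swap.
  replace (sumR R (fun j => sumR n (fun k => h (S k) * INR (S k) * (a (n - j)%nat * fps_pow a k j))))
    with (sumR R (fun j => fps_comp (fps_deriv h) a j * a (n - j)%nat)).
  - ring.
  - apply sumR_ext. intros j Hj. unfold fps_comp, fps_deriv.
    rewrite (sumR_tail (S j) n); [| lia |].
    + rewrite Rmult_comm, <- sumR_scal. apply sumR_ext. intros. ring.
    + intros k Hk. rewrite (fps_pow_val a Ha0 k j) by lia. ring.
Qed.

Lemma err_bound (h a : fps) M th m n : (forall k, Rabs (h k) <= M * th ^ k) ->
  Rabs (fps_comp h (trunc m a) n) <= fps_comp (fun k => M * th ^ k) (trunc m (fps_abs a)) n.
Proof.
  intros Hh. unfold fps_comp. eapply Rle_trans. apply sumR_abs. apply sumR_le. intros k _.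
  rewrite Rabs_mult. apply Rmult_le_compat; try apply Rabs_pos. auto.
  replace (trunc m (fps_abs a)) with (fps_abs (trunc m a)).
  apply fps_pow_abs.
  apply functional_extensionality. intro i. unfold fps_abs, trunc. destruct (Nat.leb i m); auto. apply Rabs_R0.
Qed.

Lemma b_upper alpha c beta gamma n : (1 <= alpha)%nat -> (1 <= n)%nat -> 0 < beta -> gamma <= INR c ->
  scale_seq alpha beta gamma n <= beta ^ n * Dm alpha c n.
Proof.
  intros Ha Hn Hb Hg. unfold scale_seq, Dm.
  assert (H1 : 1 <= INR n) by (apply (le_INR 1); lia).
  assert (Rpower (INR n) gamma <= INR n ^ (alpha * c)).
  { eapply Rle_trans. apply Rle_Rpower; eauto. rewrite Rpower_pow by lra.
    apply Rle_pow; auto. nia. }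
  assert (INR n ^ (alpha * n) * INR n ^ (alpha * c) <= INR (n + c) ^ (alpha * (n + c))).
  { rewrite <- pow_add. replace (alpha * n + alpha * c)%nat with (alpha * (n + c))%nat by lia.
    apply pow_incr. split. lra. apply le_INR. lia. }
  assert (0 <= INR n ^ (alpha * n)) by (apply pow_le; lra).
  assert (0 < beta ^ n) by (apply pow_lt; auto).
  assert (INR n ^ (alpha * n) * Rpower (INR n) gamma <= INR n ^ (alpha * n) * INR n ^ (alpha * c))
    by (apply Rmult_le_compat_l; auto).
  nra.
Qed.

Lemma ratio_bound (alpha c R r n : nat) beta gamma CR E :
  (1 <= alpha)%nat -> (1 <= c)%nat -> R = (r + 2 * c + 2)%nat -> (2 * R <= n)%nat -> 0 < beta ->
  - INR c <= gamma -> 0 <= CR ->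
  Rabs E <= CR * INR (S n) * beta ^ n * Dm alpha c (n - R) ->
  Rabs (E / scale_seq alpha beta gamma n) <= (2 * CR) * (/ INR n) ^ r.
Proof.
  intros Ha Hc HR Hn Hb Hg HCR HE.
  assert (Hn1 : (1 <= n)%nat) by lia.
  assert (Hx : 1 <= INR n) by (apply (le_INR 1); lia).
  set (x := INR n) in *.
  assert (Hbn : 0 < beta ^ n) by (apply pow_lt; auto).
  assert (Hlow : x ^ (alpha * n) * beta ^ n * / x ^ c <= scale_seq alpha beta gamma n).
  { unfold scale_seq. fold x. apply Rmult_le_compat_l.
    apply Rmult_le_pos. apply pow_le; lra. lra.
    rewrite <- Rpower_pow by lra. rewrite <- Rpower_Ropp. apply Rle_Rpower; lra. }
  assert (Hxp : forall k, 0 < x ^ k) by (intros; apply pow_lt; lra).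
  assert (Hpos : 0 < x ^ (alpha * n) * beta ^ n * / x ^ c).
  { apply Rmult_lt_0_compat. apply Rmult_lt_0_compat; auto. apply Rinv_0_lt_compat; auto. }
  assert (HD : Dm alpha c (n - R) <= x ^ (alpha * (n - R + c))).
  { unfold Dm. apply pow_incr. split. apply pos_INR. unfold x. apply le_INR. lia. }
  assert (HS : INR (S n) <= 2 * x) by (rewrite S_INR; fold x; lra).
  assert (Hexp : x ^ (1 + c + alpha * (n - R + c)) * x ^ r <= x ^ (alpha * n)).
  { rewrite <- pow_add. apply Rle_pow; auto. subst R. nia. }
  unfold Rdiv. rewrite Rabs_mult. rewrite Rabs_right with (r := / scale_seq alpha beta gamma n).
  2:{ apply Rle_ge. left. apply Rinv_0_lt_compat. lra. }
  apply Rle_trans with ((CR * (2 * x) * beta ^ n * x ^ (alpha * (n - R + c))) * / (x ^ (alpha * n) * beta ^ n * / x ^ c)).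
  - apply Rmult_le_compat.
    + apply Rabs_pos.
    + left. apply Rinv_0_lt_compat. lra.
    + eapply Rle_trans. apply HE.
      apply Rmult_le_compat. apply Rmult_le_pos. apply Rmult_le_pos; auto. apply pos_INR. lra.
      left; apply D_pos; auto.
      apply Rmult_le_compat_r. lra. apply Rmult_le_compat_l; auto. auto.
    + apply Rinv_le_contravar; auto.
  - rewrite pow_inv.
    replace (CR * (2 * x) * beta ^ n * x ^ (alpha * (n - R + c)) * / (x ^ (alpha * n) * beta ^ n * / x ^ c))
      with ((2 * CR) * (x ^ (1 + c + alpha * (n - R + c))) * / x ^ (alpha * n)).
    2:{ rewrite !pow_add. simpl pow. field. repeat split; apply Rgt_not_eq; first [apply Hxp | apply Hbn]. }
    rewrite Rmult_assoc. apply Rmult_le_compat_l. lra.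
    apply Rmult_le_reg_r with (x ^ (alpha * n) * x ^ r).
    apply Rmult_lt_0_compat; auto.
    replace (x ^ (1 + c + alpha * (n - R + c)) * / x ^ (alpha * n) * (x ^ (alpha * n) * x ^ r))
      with (x ^ (1 + c + alpha * (n - R + c)) * x ^ r) by (field; repeat split; apply Rgt_not_eq; apply Hxp).
    replace (/ x ^ r * (x ^ (alpha * n) * x ^ r)) with (x ^ (alpha * n)) by (field; repeat split; apply Rgt_not_eq; apply Hxp).
    auto.
Qed.

Lemma W_bound (a At : fps) alpha beta gamma c : (1 <= alpha)%nat -> (1 <= c)%nat -> 0 < beta -> gamma <= INR c ->
  a 0%nat = 0 -> asymp_approx a (scale_seq alpha beta gamma) At ->
  exists K, 0 <= K /\ forall i, fps_abs a i <= K * beta ^ i * Dm alpha c i.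
Proof.
  intros Ha Hc Hb Hg Ha0 Hasy. destruct (Hasy 0%nat) as [C [N HC]].
  assert (Hq : forall i, 0 < beta ^ i * Dm alpha c i).
  { intros. apply Rmult_lt_0_compat. apply pow_lt; auto. apply D_pos; auto. }
  assert (Hs : forall i, (i < N)%nat -> 0 <= fps_abs a i / (beta ^ i * Dm alpha c i)).
  { intros. unfold Rdiv. apply Rmult_le_pos. apply Rabs_pos. left; apply Rinv_0_lt_compat; auto. }
  set (S0 := sumR N (fun i => fps_abs a i / (beta ^ i * Dm alpha c i))).
  assert (HS0 : 0 <= S0) by (apply sumR_nonneg; auto).
  exists (Rabs C + S0). split. pose proof (Rabs_pos C). lra.
  intros i. rewrite Rmult_assoc.
  destruct (lt_dec i N) as [Hi|Hi].
  - pose proof (sumR_pos_le_sum N (fun i => fps_abs a i / (beta ^ i * Dm alpha c i)) i Hs Hi) as P.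
    fold S0 in P. specialize (Hq i).
    replace (fps_abs a i) with (fps_abs a i / (beta ^ i * Dm alpha c i) * (beta ^ i * Dm alpha c i)) by (unfold Rdiv; rewrite Rmult_assoc, Rinv_l by lra; ring).
    apply Rmult_le_compat_r. lra. pose proof (Rabs_pos C). lra.
  - destruct i.
    + unfold fps_abs. rewrite Ha0, Rabs_R0. apply Rmult_le_pos. pose proof (Rabs_pos C). lra. left; auto.
    + destruct (HC (S i) ltac:(lia)) as [e [E1 E2]].
      simpl in E1. simpl pow in E2. rewrite Rinv_1, Rmult_1_r in E2.
      unfold fps_abs. rewrite E1, Rplus_0_l, Rabs_mult.
      pose proof (b_upper alpha c beta gamma (S i) Ha ltac:(lia) Hb Hg).
      assert (0 < scale_seq alpha beta gamma (S i)) by (apply scale_seq_pos; auto; lia).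
      rewrite Rabs_right by lra.
      specialize (Hq (S i)).
      assert (Rabs e <= Rabs C + S0) by (pose proof (Rle_abs C); lra).
      rewrite Rmult_comm. apply Rmult_le_compat; try lra. apply Rabs_pos.
Qed.

Theorem proposition12 (h a At : nat -> R) (alpha : nat) (beta gamma : R) :
  analytic_at0 h ->
  a 0%nat = 0 ->
  (0 < alpha)%nat ->
  0 < beta ->
  (exists k : nat, At k <> 0) ->
  asymp_approx a (scale_seq alpha beta gamma) At ->
  asymp_approx (fps_comp h a) (scale_seq alpha beta gamma)
    (At_H alpha beta gamma At h a).
Proof.
  intros [rho [Hrho [M HM]]] Ha0 Halpha Hbeta _ Hasy.
  assert (Ha : (1 <= alpha)%nat) by lia.
  assert (Hbpos : forall n, (1 <= n)%nat -> 0 < scale_seq alpha beta gamma n)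
    by (intros; apply scale_seq_pos; auto).
  assert (Hbne : forall n, (1 <= n)%nat -> scale_seq alpha beta gamma n <> 0)
    by (intros n Hn; specialize (Hbpos n Hn); lra).
  pose proof (asymp_to_E a _ At Hbne Hasy) as HA.
  apply E_to_asymp; auto.
  intro r.
  destruct (nat_above (Rabs gamma)) as [c0 Hc0].
  set (c := Nat.max c0 1).
  assert (Hc : (1 <= c)%nat) by lia.
  assert (Hgc : Rabs gamma <= INR c) by (assert (INR c0 <= INR c) by (apply le_INR; lia); lra).
  assert (Hg1 : gamma <= INR c) by (pose proof (Rle_abs gamma); lra).
  assert (Hg2 : - INR c <= gamma) by (pose proof (Rabs_pos gamma); pose proof (Rle_abs (- gamma)); rewrite Rabs_Ropp in *; lra).
  set (R := (r + 2 * c + 2)%nat).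
  assert (HM0 : 0 <= M) by (specialize (HM 0%nat); simpl in HM; pose proof (Rabs_pos (h 0%nat)); lra).
  set (th := / rho).
  assert (Hth : 0 <= th) by (left; apply Rinv_0_lt_compat; auto).
  assert (Hh : forall k, Rabs (h k) <= M * th ^ k).
  { intros k. specialize (HM k). unfold th. rewrite pow_inv.
    assert (0 < rho ^ k) by (apply pow_lt; auto).
    apply Rmult_le_reg_r with (rho ^ k); auto. rewrite Rmult_assoc, Rinv_l by lra. lra. }
  destruct (W_bound a At alpha beta gamma c Ha Hc Hbeta Hg1 Ha0 Hasy) as [K [HK HWb]].
  assert (HW0 : fps_abs a 0%nat = 0) by (unfold fps_abs; rewrite Ha0; apply Rabs_R0).
  assert (HWn : forall i, 0 <= fps_abs a i) by (intros; apply Rabs_pos).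
  destruct (U_bound alpha c beta K M th (fps_abs a) Ha Hc Hbeta HK HM0 Hth HW0 HWn HWb R) as [CR [HCR HU]].
  set (d := fun j => fps_comp (fps_deriv h) a j).
  assert (Hmain : EXPr (fun n => sumR R (fun j => d j * (a (n - j)%nat / scale_seq alpha beta gamma n)))
                       (fun l => sumR R (fun j => fps_scale (d j) (At_j alpha beta gamma At j) l)) r).
  { apply (E_sum R (fun j n => d j * (a (n - j)%nat / scale_seq alpha beta gamma n))).
    intros j _. apply E_scale. apply E_term; auto. }
  assert (Herr : EXPr (fun n => fps_comp h (trunc (n - R) a) n / scale_seq alpha beta gamma n) (fun _ => 0) r).
  { apply E_zero. exists (2 * CR), (2 * R)%nat. intros n Hn.
    apply (ratio_bound alpha c R r n beta gamma CR); auto.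
    eapply Rle_trans. apply err_bound. apply Hh.
    apply HU. unfold R; lia. lia. }
  eapply E_ext_fun. 2: eapply E_ext_fps. 3: apply (E_add _ _ _ _ _ Herr Hmain).
  - instantiate (1 := (2 * R)%nat). intros n Hn. simpl.
    rewrite (decomp h a n R Ha0 ltac:(unfold R; lia) Hn).
    assert (0 < scale_seq alpha beta gamma n) by (apply Hbpos; unfold R in *; lia).
    unfold Rdiv. rewrite Rmult_plus_distr_r. f_equal.
    rewrite Rmult_comm, <- sumR_scal. apply sumR_ext. intros j _. unfold d. ring.
  - intros l Hl. unfold fps_add, At_H. rewrite Rplus_0_l.
    rewrite (sumR_tail (S l) R); [| unfold R; lia |].
    + apply sumR_ext. intros j _. unfold fps_scale, d. ring.
    + intros j Hj. unfold fps_scale, At_j. cbv zeta. unfold fps_scale at 1, fps_shift at 1.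
      destruct (Nat.leb (alpha * j) l) eqn:E. apply Nat.leb_le in E. nia. ring.
Qed.
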